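(* For $|q|<1$, \begin{align*} \phi(q)+\sum_{r=1}^{\infty}(-1;q^2)_rq^r&=\sum_{n=-\infty}^{\infty}\frac{q^{n^2}}{(-q^2;q^2)_n}=\frac{(-q,-q,q^2;q^2)_{\infty}}{(q,-q^2;q^2)_{\infty}},\\ \nu(q)+\sum_{r=0}^{\infty}(-q;q^2)_rq^r&=\sum_{n=-\infty}^{\infty}\frac{q^{n^2+n}}{(-q;q^2)_{n+1}}=2(-q^2,-q^2;q^2)_{\infty}(q^4;q^4)_{\infty},\\ \psi(q)+\sum_{r=0}^{\infty}(q;q^2)_r(-1)^r&=\sum_{n=-\infty}^{\infty}\frac{q^{n^2}}{(q;q^2)_n}=\frac{(-q,-q,q^2;q^2)_{\infty}}{2(q,-q^2;q^2)_{\infty}}, \end{align*} where in the third identity the series $\sum_{r\ge0}(q;q^2)_r(-1)^r$ (equivalently the part of the bilateral series with negative index) is summed in the Cesàro sense.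
   Context: For $n\ge 0$, $(a;q)_n=\prod_{j=0}^{n-1}(1-aq^j)$, $(a;q)_\infty=\prod_{j\ge0}(1-aq^j)$, and for negative index $(a;q)_{-n}=1/(aq^{-n};q)_n$. Also $(a_1,\dots,a_k;q)_n=(a_1;q)_n\cdots(a_k;q)_n$ (same for $n=\infty$). Third order mock theta functions: $\phi(q)=\sum_{n\ge0}\frac{q^{n^2}}{(-q^2;q^2)_n}$, $\psi(q)=\sum_{n\ge1}\frac{q^{n^2}}{(q;q^2)_n}$, $\nu(q)=\sum_{n\ge0}\frac{q^{n^2+n}}{(-q;q^2)_{n+1}}$. *)

(* Defs.v *)
From Stdlib Require Import Reals ZArith.
Open Scope R_scope.

Record Cplx : Type := mkC { Re : R; Im : R }.

Definition Czero : Cplx := mkC 0 0.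
Definition Cone : Cplx := mkC 1 0.
Definition RtoC (x : R) : Cplx := mkC x 0.
Definition Cadd (z w : Cplx) : Cplx := mkC (Re z + Re w) (Im z + Im w).
Definition Copp (z : Cplx) : Cplx := mkC (- Re z) (- Im z).
Definition Csub (z w : Cplx) : Cplx := Cadd z (Copp w).
Definition Cmul (z w : Cplx) : Cplx :=
  mkC (Re z * Re w - Im z * Im w) (Re z * Im w + Im z * Re w).
Definition Cnorm2 (z : Cplx) : R := Re z * Re z + Im z * Im z.
(* Cinv 0 = 0 by the (irrelevant here) total convention *)
Definition Cinv (z : Cplx) : Cplx := mkC (Re z / Cnorm2 z) (- Im z / Cnorm2 z).
Definition Cdiv (z w : Cplx) : Cplx := Cmul z (Cinv w).
Definition Cnorm (z : Cplx) : R := sqrt (Cnorm2 z).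
Fixpoint Cpow (z : Cplx) (n : nat) : Cplx :=
  match n with O => Cone | S k => Cmul z (Cpow z k) end.

Definition Ccv (u : nat -> Cplx) (l : Cplx) : Prop :=
  forall eps : R, eps > 0 -> exists N : nat, forall n : nat, (n >= N)%nat ->
    Cnorm (Csub (u n) l) < eps.

Fixpoint Csum (f : nat -> Cplx) (N : nat) : Cplx :=
  match N with O => f O | S k => Cadd (Csum f k) (f (S k)) end.

Definition Cser (f : nat -> Cplx) (l : Cplx) : Prop := Ccv (Csum f) l.

(* the series sum_{k>=0} f k is Cesaro summable to l:
   the arithmetic means of the partial sums converge to l *)
Definition Ccesaro (f : nat -> Cplx) (l : Cplx) : Prop :=
  Ccv (fun N => Cmul (RtoC (/ INR (S N))) (Csum (Csum f) N)) l.

Fixpoint qpoch (a q : Cplx) (n : nat) : Cplx :=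
  match n with
  | O => Cone
  | S k => Cmul (qpoch a q k) (Csub Cone (Cmul a (Cpow q k)))
  end.

Definition qpochZ (a q : Cplx) (n : Z) : Cplx :=
  match n with
  | Z0 => Cone
  | Zpos p => qpoch a q (Pos.to_nat p)
  | Zneg p => Cinv (qpoch (Cmul a (Cpow (Cinv q) (Pos.to_nat p))) q (Pos.to_nat p))
  end.

Definition qpinf (a q l : Cplx) : Prop := Ccv (qpoch a q) l.

Definition phi_term (q : Cplx) (n : nat) : Cplx :=
  Cdiv (Cpow q (n * n)) (qpoch (Copp (Cpow q 2)) (Cpow q 2) n).
(* psi(q) = sum_{n>=1}: shifted index n = k+1 *)
Definition psi_term (q : Cplx) (k : nat) : Cplx :=
  Cdiv (Cpow q (S k * S k)) (qpoch q (Cpow q 2) (S k)).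
Definition nu_term (q : Cplx) (n : nat) : Cplx :=
  Cdiv (Cpow q (n * n + n)) (qpoch (Copp q) (Cpow q 2) (S n)).

Definition bil1 (q : Cplx) (n : Z) : Cplx :=
  Cdiv (Cpow q (Z.to_nat (n * n))) (qpochZ (Copp (Cpow q 2)) (Cpow q 2) n).
Definition bil2 (q : Cplx) (n : Z) : Cplx :=
  Cdiv (Cpow q (Z.to_nat (n * n + n))) (qpochZ (Copp q) (Cpow q 2) (n + 1)).
Definition bil3 (q : Cplx) (n : Z) : Cplx :=
  Cdiv (Cpow q (Z.to_nat (n * n))) (qpochZ q (Cpow q 2) n).

(* Main.v *)
Require Import Defs.
From Stdlib Require Import Reals ZArith Lra Lia Psatz Field ClassicalEpsilon.
From Coquelicot Require Complex.
Open Scope R_scope.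

Lemma Cplx_ext : forall z w : Cplx, Re z = Re w -> Im z = Im w -> z = w.
Proof. intros [a b] [c d]; simpl; intros; subst; reflexivity. Qed.

Ltac cx := intros; repeat match goal with z : Cplx |- _ => destruct z end;
  apply Cplx_ext; unfold Cadd, Cmul, Csub, Copp, Czero, Cone, RtoC; simpl; ring.

Lemma Cring_theory : ring_theory Czero Cone Cadd Cmul Csub Copp (@eq Cplx).
Proof. constructor; try cx. Qed.

Lemma Cinv_l : forall z, z <> Czero -> Cmul (Cinv z) z = Cone.
Proof. intros [a b] H. unfold Cinv, Cmul, Cnorm2, Cone; simpl.
  assert (a*a+b*b <> 0).
  { intro E. apply H. assert (a = 0) by nra. assert (b = 0) by nra. subst. reflexivity. }
  apply Cplx_ext; simpl; field; auto. Qed.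

Lemma Cfield_theory : field_theory Czero Cone Cadd Cmul Csub Copp Cdiv Cinv (@eq Cplx).
Proof. constructor.
  - exact Cring_theory.
  - intro E. injection E. lra.
  - reflexivity.
  - exact Cinv_l. Qed.

Lemma Cpow_add : forall x a b, Cpow x (a + b) = Cmul (Cpow x a) (Cpow x b).
Proof. intros x a b; induction a; simpl. cx. rewrite IHa. cx. Qed.

Lemma C_power_theory : power_theory Cone Cmul (@eq Cplx) N.to_nat Cpow.
Proof. constructor. destruct n.
  - reflexivity.
  - simpl. induction p.
    + rewrite Pos2Nat.inj_xI. simpl. rewrite Nat.add_0_r, Cpow_add, IHp. reflexivity.
    + rewrite Pos2Nat.inj_xO. simpl. rewrite Nat.add_0_r, Cpow_add, IHp. reflexivity.
    + simpl. cx.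
Qed.

Ltac Cpow_tac t :=
  match isnatcst t with
  | false => constr:(InitialRing.NotConstant)
  | _ => constr:(N.of_nat t)
  end.

Add Field CField : Cfield_theory (power_tac C_power_theory [Cpow_tac]).

Definition toc (z : Cplx) : Complex.C := (Re z, Im z).

Lemma Cnorm_Cmod : forall z, Cnorm z = Complex.Cmod (toc z).
Proof. intros [a b]; unfold Cnorm, Complex.Cmod, Cnorm2, toc; simpl. f_equal; ring. Qed.

Lemma Cnorm_ge0 : forall z, 0 <= Cnorm z.
Proof. intros; unfold Cnorm; apply sqrt_pos. Qed.

Lemma Cnorm_triangle : forall z w, Cnorm (Cadd z w) <= Cnorm z + Cnorm w.
Proof. intros. rewrite !Cnorm_Cmod. exact (Complex.Cmod_triangle (toc z) (toc w)). Qed.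

Lemma Cnorm_mul : forall z w, Cnorm (Cmul z w) = Cnorm z * Cnorm w.
Proof. intros. rewrite !Cnorm_Cmod. exact (Complex.Cmod_mult (toc z) (toc w)). Qed.

Lemma Cnorm_opp : forall z, Cnorm (Copp z) = Cnorm z.
Proof. intros [a b]; unfold Cnorm, Cnorm2, Copp; simpl; f_equal; ring. Qed.

Lemma Cnorm_zero : Cnorm Czero = 0.
Proof. unfold Cnorm, Cnorm2, Czero; simpl. replace (0*0+0*0) with 0 by ring. apply sqrt_0. Qed.

Lemma Cnorm_one : Cnorm Cone = 1.
Proof. unfold Cnorm, Cnorm2, Cone; simpl. replace (1*1+0*0) with 1 by ring. apply sqrt_1. Qed.

Lemma Cnorm_RtoC : forall r, Cnorm (RtoC r) = Rabs r.
Proof. intros r. unfold Cnorm, Cnorm2, RtoC; simpl. rewrite <- sqrt_Rsqr_abs.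
  unfold Rsqr. f_equal; ring. Qed.

Lemma Cnorm_eq0 : forall z, Cnorm z = 0 -> z = Czero.
Proof. intros z H. rewrite Cnorm_Cmod in H. apply Complex.Cmod_eq_0 in H.
  destruct z; unfold toc in H; simpl in H. injection H; intros; subst; reflexivity. Qed.

Lemma Cnorm_pos : forall z, z <> Czero -> 0 < Cnorm z.
Proof. intros z H. destruct (Cnorm_ge0 z); auto. exfalso; apply H, Cnorm_eq0; auto. Qed.

Lemma Cnorm_pow : forall z n, Cnorm (Cpow z n) = Cnorm z ^ n.
Proof. intros z n; induction n; simpl. apply Cnorm_one. rewrite Cnorm_mul, IHn; reflexivity. Qed.

Lemma Cnorm_sub : forall z w, Cnorm (Csub z w) = Cnorm (Csub w z).
Proof. intros. replace (Csub z w) with (Copp (Csub w z)) by cx. apply Cnorm_opp. Qed.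

Lemma Cnorm_inv : forall z, z <> Czero -> Cnorm (Cinv z) = / Cnorm z.
Proof. intros z H. assert (Cnorm (Cmul (Cinv z) z) = 1) by (rewrite Cinv_l; auto; apply Cnorm_one).
  rewrite Cnorm_mul in H0. pose proof (Cnorm_pos z H).
  apply (Rmult_eq_reg_r (Cnorm z)); [|lra]. rewrite H0, Rinv_l; lra. Qed.

Lemma Cnorm_rev : forall z w, Cnorm z - Cnorm w <= Cnorm (Cadd z w).
Proof. intros. pose proof (Cnorm_triangle (Cadd z w) (Copp w)). rewrite Cnorm_opp in H.
  replace (Cadd (Cadd z w) (Copp w)) with z in H by cx. lra. Qed.

Lemma Cnorm_sub_tri : forall a b c, Cnorm (Csub a c) <= Cnorm (Csub a b) + Cnorm (Csub b c).
Proof. intros. replace (Csub a c) with (Cadd (Csub a b) (Csub b c)) by cx. apply Cnorm_triangle. Qed.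

Lemma Re_le : forall z, Rabs (Re z) <= Cnorm z.
Proof. intros. rewrite Cnorm_Cmod. apply (Complex.re_le_Cmod (toc z)). Qed.
Lemma Im_le : forall z, Rabs (Im z) <= Cnorm z.
Proof. intros [a b]. unfold Cnorm, Cnorm2; simpl. rewrite <- sqrt_Rsqr_abs. apply sqrt_le_1_alt.
  unfold Rsqr; nra. Qed.
Lemma Cnorm_le_comp : forall z, Cnorm z <= Rabs (Re z) + Rabs (Im z).
Proof. intros [a b]. unfold Cnorm, Cnorm2; simpl.
  rewrite <- (sqrt_Rsqr (Rabs a + Rabs b)) by (pose proof (Rabs_pos a); pose proof (Rabs_pos b); lra).
  apply sqrt_le_1_alt. unfold Rsqr. pose proof (Rabs_pos a); pose proof (Rabs_pos b).
  assert (Rabs a * Rabs a = a * a) by (rewrite <- Rabs_mult; apply Rabs_right; nra).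
  assert (Rabs b * Rabs b = b * b) by (rewrite <- Rabs_mult; apply Rabs_right; nra).
  nra. Qed.

Lemma Ccv_unique : forall u l1 l2, Ccv u l1 -> Ccv u l2 -> l1 = l2.
Proof. intros u l1 l2 H1 H2.
  destruct (Req_dec (Cnorm (Csub l1 l2)) 0) as [E|E].
  - apply Cnorm_eq0 in E. replace l1 with (Cadd (Csub l1 l2) l2) by cx. rewrite E. cx.
  - pose proof (Cnorm_ge0 (Csub l1 l2)). set (e := Cnorm (Csub l1 l2)) in *.
    destruct (H1 (e/2)) as [N1 HN1]; [lra|]. destruct (H2 (e/2)) as [N2 HN2]; [lra|].
    specialize (HN1 (N1+N2)%nat ltac:(lia)). specialize (HN2 (N1+N2)%nat ltac:(lia)).
    pose proof (Cnorm_sub_tri l1 (u (N1+N2)%nat) l2). rewrite (Cnorm_sub l1 (u _)) in H0. unfold e in *. lra. Qed.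

Lemma Ccv_const : forall c, Ccv (fun _ => c) c.
Proof. intros c e He. exists 0%nat. intros. replace (Csub c c) with Czero by cx.
  rewrite Cnorm_zero; lra. Qed.

Lemma Ccv_ext_ev : forall u v l K, (forall n, (n >= K)%nat -> u n = v n) -> Ccv u l -> Ccv v l.
Proof. intros u v l K E H e He. destruct (H e He) as [N HN]. exists (N+K)%nat. intros n Hn.
  rewrite <- E by lia. apply HN; lia. Qed.

Lemma Ccv_ext : forall u v l, (forall n, u n = v n) -> Ccv u l -> Ccv v l.
Proof. intros. apply (Ccv_ext_ev u v l 0); auto. Qed.

Lemma Ccv_add : forall u v a b, Ccv u a -> Ccv v b -> Ccv (fun n => Cadd (u n) (v n)) (Cadd a b).
Proof. intros u v a b H1 H2 e He. destruct (H1 (e/2)) as [N1 HN1]; [lra|].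
  destruct (H2 (e/2)) as [N2 HN2]; [lra|]. exists (N1+N2)%nat. intros n Hn.
  replace (Csub (Cadd (u n) (v n)) (Cadd a b)) with (Cadd (Csub (u n) a) (Csub (v n) b)) by cx.
  pose proof (Cnorm_triangle (Csub (u n) a) (Csub (v n) b)).
  specialize (HN1 n ltac:(lia)). specialize (HN2 n ltac:(lia)). lra. Qed.

Lemma Ccv_scal : forall u a c, Ccv u a -> Ccv (fun n => Cmul c (u n)) (Cmul c a).
Proof. intros u a c H e He.
  destruct (H (e / (Cnorm c + 1))) as [N HN].
  { apply Rdiv_lt_0_compat; auto. pose proof (Cnorm_ge0 c); lra. }
  exists N. intros n Hn. replace (Csub (Cmul c (u n)) (Cmul c a)) with (Cmul c (Csub (u n) a)) by cx.
  rewrite Cnorm_mul. specialize (HN n Hn). pose proof (Cnorm_ge0 c). pose proof (Cnorm_ge0 (Csub (u n) a)).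
  apply Rle_lt_trans with ((Cnorm c + 1) * Cnorm (Csub (u n) a)). nra.
  replace e with ((Cnorm c + 1) * (e / (Cnorm c + 1))) by (field; lra).
  apply Rmult_lt_compat_l; lra. Qed.

Lemma Ccv_opp : forall u a, Ccv u a -> Ccv (fun n => Copp (u n)) (Copp a).
Proof. intros. apply (Ccv_ext (fun n => Cmul (Copp Cone) (u n))). intros; cx.
  replace (Copp a) with (Cmul (Copp Cone) a) by cx. apply Ccv_scal; auto. Qed.

Lemma Ccv_sub : forall u v a b, Ccv u a -> Ccv v b -> Ccv (fun n => Csub (u n) (v n)) (Csub a b).
Proof. intros. apply Ccv_add; auto. apply Ccv_opp; auto. Qed.

Lemma Ccv_bounded : forall u l, Ccv u l -> exists B, forall n, Cnorm (u n) <= B.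
Proof. intros u l H. destruct (H 1 ltac:(lra)) as [N HN].
  assert (forall m, exists B, forall n, (n <= m)%nat -> Cnorm (u n) <= B).
  { induction m. exists (Cnorm (u 0%nat)). intros n Hn. replace n with 0%nat by lia. lra.
    destruct IHm as [B HB]. exists (Rmax B (Cnorm (u (S m)))). intros n Hn.
    destruct (Nat.eq_dec n (S m)). subst. apply Rmax_r. eapply Rle_trans. apply HB; lia. apply Rmax_l. }
  destruct (H0 N) as [B HB]. exists (Rmax B (Cnorm l + 1)). intros n.
  destruct (le_lt_dec n N). eapply Rle_trans. apply HB; auto. apply Rmax_l.
  eapply Rle_trans; [|apply Rmax_r]. specialize (HN n ltac:(lia)).
  pose proof (Cnorm_triangle (Csub (u n) l) l). replace (Cadd (Csub (u n) l) l) with (u n) in H1 by cx. lra. Qed.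

Lemma Ccv_mul : forall u v a b, Ccv u a -> Ccv v b -> Ccv (fun n => Cmul (u n) (v n)) (Cmul a b).
Proof. intros u v a b H1 H2.
  assert (E : forall n, Cmul (u n) (v n) = Cadd (Cmul (u n) (Csub (v n) b)) (Cmul b (u n))) by (intros; cx).
  apply (Ccv_ext _ _ _ (fun n => eq_sym (E n))).
  replace (Cmul a b) with (Cadd Czero (Cmul b a)) by cx. apply Ccv_add; [|apply Ccv_scal; auto].
  destruct (Ccv_bounded u a H1) as [B HB]. intros e He.
  destruct (H2 (e / (Rabs B + 1))) as [N HN]. { apply Rdiv_lt_0_compat; auto. pose proof (Rabs_pos B); lra. }
  exists N. intros n Hn. replace (Csub (Cmul (u n) (Csub (v n) b)) Czero) with (Cmul (u n) (Csub (v n) b)) by cx.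
  rewrite Cnorm_mul. specialize (HN n Hn). specialize (HB n). pose proof (Cnorm_ge0 (u n)).
  pose proof (Cnorm_ge0 (Csub (v n) b)). pose proof (Rle_abs B).
  apply Rle_lt_trans with ((Rabs B + 1) * Cnorm (Csub (v n) b)). nra.
  replace e with ((Rabs B + 1) * (e / (Rabs B + 1))) by (field; pose proof (Rabs_pos B); lra).
  apply Rmult_lt_compat_l. pose proof (Rabs_pos B); lra. auto. Qed.

Lemma Ccv_shift : forall u l, Ccv u l -> Ccv (fun n => u (S n)) l.
Proof. intros u l H e He. destruct (H e He) as [N HN]. exists N. intros; apply HN; lia. Qed.

Lemma Ccv_unshift : forall u l, Ccv (fun n => u (S n)) l -> Ccv u l.
Proof. intros u l H e He. destruct (H e He) as [N HN]. exists (S N). intros n Hn.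
  destruct n. lia. apply HN; lia. Qed.

Lemma Ccv_subseq : forall u l f, (forall n, (n <= f n)%nat) -> Ccv u l -> Ccv (fun n => u (f n)) l.
Proof. intros u l f Hf H e He. destruct (H e He) as [N HN]. exists N. intros n Hn.
  apply HN. specialize (Hf n); lia. Qed.

Lemma Ccv_norm_le : forall u l c B K, Ccv u l -> (forall n, (n >= K)%nat -> Cnorm (Csub (u n) c) <= B) ->
  Cnorm (Csub l c) <= B.
Proof. intros u l c B K H HB. apply Rnot_lt_le. intro Hlt.
  set (e := Cnorm (Csub l c) - B). destruct (H e ltac:(unfold e; lra)) as [N HN].
  specialize (HN (N+K)%nat ltac:(lia)). specialize (HB (N+K)%nat ltac:(lia)).
  pose proof (Cnorm_sub_tri l (u (N+K)%nat) c). rewrite (Cnorm_sub l (u _)) in H0. unfold e in HN. lra. Qed.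

Lemma Ccv_norm_ge : forall u l c, Ccv u l -> (forall n, c <= Cnorm (u n)) -> c <= Cnorm l.
Proof. intros u l c H Hc. apply Rnot_lt_le. intro Hlt.
  set (e := c - Cnorm l). destruct (H e ltac:(unfold e; lra)) as [N HN].
  specialize (HN N ltac:(lia)). specialize (Hc N).
  pose proof (Cnorm_triangle (Csub (u N) l) l). replace (Cadd (Csub (u N) l) l) with (u N) in H0 by cx.
  unfold e in HN. lra. Qed.

Lemma Ccv_inv : forall u l, Ccv u l -> l <> Czero -> Ccv (fun n => Cinv (u n)) (Cinv l).
Proof. intros u l H Hl. pose proof (Cnorm_pos l Hl) as Hp. set (m := Cnorm l) in *.
  destruct (H (m/2) ltac:(lra)) as [N0 HN0].
  assert (Hlow : forall n, (n >= N0)%nat -> m/2 <= Cnorm (u n)).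
  { intros n Hn. specialize (HN0 n Hn). pose proof (Cnorm_triangle (Csub l (u n)) (u n)).
    replace (Cadd (Csub l (u n)) (u n)) with l in H0 by cx. rewrite Cnorm_sub in H0. fold m in H0. lra. }
  intros e He. destruct (H (e * (m*m/2))) as [N1 HN1]. { apply Rmult_lt_0_compat; nra. }
  exists (N0+N1)%nat. intros n Hn. specialize (Hlow n ltac:(lia)). specialize (HN1 n ltac:(lia)).
  assert (Hun : u n <> Czero). { intro E. rewrite E, Cnorm_zero in Hlow. lra. }
  replace (Csub (Cinv (u n)) (Cinv l)) with (Cmul (Csub l (u n)) (Cinv (Cmul (u n) l))) by (field; auto).
  rewrite Cnorm_mul, Cnorm_inv, Cnorm_mul, Cnorm_sub. fold m.
  2:{ intro E. assert (Cnorm (Cmul (u n) l) = 0) by (rewrite E; apply Cnorm_zero). rewrite Cnorm_mul in H0.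
      fold m in H0. nra. }
  apply Rlt_le_trans with ((e * (m*m/2)) * / (Cnorm (u n) * m)).
  apply Rmult_lt_compat_r; auto. apply Rinv_0_lt_compat; nra.
  apply Rle_trans with ((e * (m*m/2)) * / (m/2 * m)).
  apply Rmult_le_compat_l. nra. apply Rinv_le_contravar; nra.
  right. field. lra. Qed.

Lemma Rpow_cv0 : forall r, 0 <= r < 1 -> forall e, e > 0 -> exists N, forall n, (n >= N)%nat -> r ^ n < e.
Proof. intros r Hr e He. destruct (pow_lt_1_zero r ltac:(rewrite Rabs_right; lra) e He) as [N HN].
  exists N. intros n Hn. specialize (HN n Hn). rewrite Rabs_right in HN; auto. apply Rle_ge, pow_le; lra. Qed.

Lemma Ccv_pow0 : forall x, Cnorm x < 1 -> Ccv (fun n => Cpow x n) Czero.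
Proof. intros x Hx e He. destruct (Rpow_cv0 (Cnorm x) ltac:(pose proof (Cnorm_ge0 x); lra) e He) as [N HN].
  exists N. intros n Hn. replace (Csub (Cpow x n) Czero) with (Cpow x n) by cx. rewrite Cnorm_pow. auto. Qed.

Definition CCauchy (u : nat -> Cplx) := forall eps, eps > 0 -> exists N, forall n m, (n >= N)%nat -> (m >= N)%nat ->
  Cnorm (Csub (u n) (u m)) < eps.

Lemma C_complete : forall u, CCauchy u -> { l | Ccv u l }.
Proof. intros u H.
  assert (H1 : Cauchy_crit (fun n => Re (u n))).
  { intros e He. destruct (H e He) as [N HN]. exists N. intros n m Hn Hm. unfold Rdist.
    eapply Rle_lt_trans; [|apply (HN n m Hn Hm)]. pose proof (Re_le (Csub (u n) (u m))).
    destruct (u n), (u m); simpl in *. unfold Rminus. auto. }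
  assert (H2 : Cauchy_crit (fun n => Im (u n))).
  { intros e He. destruct (H e He) as [N HN]. exists N. intros n m Hn Hm. unfold Rdist.
    eapply Rle_lt_trans; [|apply (HN n m Hn Hm)]. pose proof (Im_le (Csub (u n) (u m))).
    destruct (u n), (u m); simpl in *. unfold Rminus. auto. }
  destruct (R_complete _ H1) as [a Ha]. destruct (R_complete _ H2) as [b Hb].
  exists (mkC a b). intros e He. destruct (Ha (e/2) ltac:(lra)) as [N1 HN1].
  destruct (Hb (e/2) ltac:(lra)) as [N2 HN2]. exists (N1+N2)%nat. intros n Hn.
  specialize (HN1 n ltac:(lia)). specialize (HN2 n ltac:(lia)). unfold Rdist in *.
  pose proof (Cnorm_le_comp (Csub (u n) (mkC a b))). destruct (u n); simpl in *. unfold Rminus in *. lra. Qed.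

Lemma Csum_ext : forall a b n, (forall k, a k = b k) -> Csum a n = Csum b n.
Proof. intros a b n H; induction n; simpl; rewrite ?IHn, ?H; auto. Qed.

Lemma Cser_ext : forall a b l, (forall k, a k = b k) -> Cser a l -> Cser b l.
Proof. intros a b l H H1. unfold Cser in *. apply (Ccv_ext (Csum a)); auto. intros; apply Csum_ext; auto. Qed.

Lemma Cser_unique : forall a l1 l2, Cser a l1 -> Cser a l2 -> l1 = l2.
Proof. intros. eapply Ccv_unique; eauto. Qed.

Lemma Csum_add : forall a b n, Csum (fun k => Cadd (a k) (b k)) n = Cadd (Csum a n) (Csum b n).
Proof. intros a b n; induction n; simpl; auto. rewrite IHn. cx. Qed.

Lemma Csum_scal : forall a c n, Csum (fun k => Cmul c (a k)) n = Cmul c (Csum a n).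
Proof. intros a c n; induction n; simpl; auto. rewrite IHn. cx. Qed.

Lemma Cser_add : forall a b la lb, Cser a la -> Cser b lb -> Cser (fun k => Cadd (a k) (b k)) (Cadd la lb).
Proof. intros. unfold Cser. apply (Ccv_ext (fun n => Cadd (Csum a n) (Csum b n))).
  intros; rewrite Csum_add; auto. apply Ccv_add; auto. Qed.

Lemma Cser_scal : forall a la c, Cser a la -> Cser (fun k => Cmul c (a k)) (Cmul c la).
Proof. intros. unfold Cser. apply (Ccv_ext (fun n => Cmul c (Csum a n))).
  intros; rewrite Csum_scal; auto. apply Ccv_scal; auto. Qed.

Lemma Csum_shift : forall a n, Csum (fun k => a (S k)) n = Csub (Csum a (S n)) (a 0%nat).
Proof. intros a n; induction n; simpl. cx. rewrite IHn. simpl. cx. Qed.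

Lemma Cser_shift : forall a l, Cser a l -> Cser (fun k => a (S k)) (Csub l (a 0%nat)).
Proof. intros. unfold Cser. apply (Ccv_ext (fun n => Csub (Csum a (S n)) (a 0%nat))).
  intros; rewrite Csum_shift; auto. apply (Ccv_sub (fun n => Csum a (S n)) (fun _ => a 0%nat)).
  apply Ccv_shift; auto. apply Ccv_const. Qed.

Lemma Cser_unshift : forall a l, Cser (fun k => a (S k)) l -> Cser a (Cadd (a 0%nat) l).
Proof. intros. unfold Cser. apply Ccv_unshift.
  apply (Ccv_ext (fun n => Cadd (a 0%nat) (Csum (fun k => a (S k)) n))).
  intros; rewrite Csum_shift; cx. apply (Ccv_add (fun _ => a 0%nat)); auto. apply Ccv_const. Qed.

Definition prep (c : Cplx) (s : nat -> Cplx) (n : nat) : Cplx :=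
  match n with O => c | S m => s m end.

Lemma Cser_prep : forall c s l, Cser s l -> Cser (prep c s) (Cadd c l).
Proof. intros. apply (Cser_unshift (prep c s)). simpl. auto. Qed.

Lemma Ccv_Csum : forall f g K, (forall k, Ccv (fun N => f N k) (g k)) -> Ccv (fun N => Csum (f N) K) (Csum g K).
Proof. intros f g K H; induction K; simpl. auto. apply (Ccv_add (fun N => Csum (f N) K) (fun N => f N (S K))); auto. Qed.

Lemma psum_diff : forall a M th K d, 0 <= th < 1 -> (forall k, Cnorm (a k) <= M * th ^ k) ->
  Cnorm (Csub (Csum a (K+d)) (Csum a K)) <= M * th ^ (S K) * (1 - th ^ d) / (1 - th).
Proof. intros a M th K d Hth Ha. induction d.
  - rewrite Nat.add_0_r. replace (Csub (Csum a K) (Csum a K)) with Czero by cx. rewrite Cnorm_zero.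
    simpl. right. field. lra.
  - rewrite Nat.add_succ_r. simpl Csum.
    replace (Csub (Cadd (Csum a (K + d)) (a (S (K + d)))) (Csum a K))
      with (Cadd (Csub (Csum a (K + d)) (Csum a K)) (a (S (K+d)))) by cx.
    eapply Rle_trans. apply Cnorm_triangle. specialize (Ha (S (K+d))).
    replace (th ^ S (K+d)) with (th ^ S K * th ^ d) in Ha by (rewrite <- pow_add; f_equal; lia).
    apply Rle_trans with (M * th ^ S K * (1 - th ^ d) / (1 - th) + M * (th ^ S K * th ^ d)). lra.
    right. simpl. field. lra. Qed.

Lemma M_nonneg : forall a M th, (forall k, Cnorm (a k) <= M * th ^ k) -> 0 <= M.
Proof. intros. specialize (H 0%nat). simpl in H. pose proof (Cnorm_ge0 (a 0%nat)). lra. Qed.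

Lemma pow_le1 : forall th n, 0 <= th <= 1 -> th ^ n <= 1.
Proof. intros. rewrite <- (pow1 n). apply pow_incr; lra. Qed.

Lemma pow_decr : forall th m n, 0 <= th <= 1 -> (m <= n)%nat -> th ^ n <= th ^ m.
Proof. intros. replace n with (m + (n - m))%nat by lia. rewrite pow_add.
  pose proof (pow_le1 th (n-m) H). assert (0 <= th ^ m) by (apply pow_le; lra).
  assert (0 <= th ^ (n-m)) by (apply pow_le; lra). nra. Qed.

Lemma psum_tail : forall a M th K n, 0 <= th < 1 -> (forall k, Cnorm (a k) <= M * th ^ k) -> (n >= K)%nat ->
  Cnorm (Csub (Csum a n) (Csum a K)) <= M * th ^ (S K) / (1 - th).
Proof. intros. replace n with (K + (n - K))%nat by lia. eapply Rle_trans; [apply (psum_diff a M th K); auto|].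
  pose proof (M_nonneg _ _ _ H0). assert (0 <= th ^ (n-K)) by (apply pow_le; lra).
  assert (0 <= th ^ S K) by (apply pow_le; lra).
  match goal with |- ?A * ?B * (1 - ?X) / ?Y <= _ => 
    assert (0 <= A * B) by (apply Rmult_le_pos; auto; apply pow_le; lra);
    assert (0 <= X) by (apply pow_le; lra);
    assert (0 < / Y) by (apply Rinv_0_lt_compat; lra);
    assert (0 <= (A*B) * X * / Y) by (apply Rmult_le_pos; [apply Rmult_le_pos|]; lra);
    unfold Rdiv; replace (A * B * (1 - X) * / Y) with (A * B * / Y - (A*B)*X*/Y) by ring; lra end. Qed.

Lemma small_geo : forall M th e, 0 <= th < 1 -> e > 0 -> exists K, M * th ^ (S K) / (1 - th) < e.
Proof. intros M th e Hth He.
  destruct (Rpow_cv0 th Hth (e * (1 - th) / (Rabs M + 1))) as [K HK].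
  { apply Rdiv_lt_0_compat. nra. pose proof (Rabs_pos M); lra. }
  exists K. specialize (HK (S K) ltac:(lia)). pose proof (Rle_abs M). pose proof (Rabs_pos M).
  assert (0 <= th ^ S K) by (apply pow_le; lra).
  apply (Rmult_lt_reg_r (1 - th)). lra. unfold Rdiv. rewrite Rmult_assoc, Rinv_l, Rmult_1_r by lra.
  apply Rle_lt_trans with ((Rabs M + 1) * th ^ S K). nra.
  apply (Rmult_lt_reg_r (/ (Rabs M + 1))). apply Rinv_0_lt_compat; lra.
  replace ((Rabs M + 1) * th ^ S K * / (Rabs M + 1)) with (th ^ S K) by (field; lra). lra. Qed.

Lemma Cser_gdom : forall a M th, 0 <= th < 1 -> (forall k, Cnorm (a k) <= M * th ^ k) -> { l | Cser a l }.
Proof. intros a M th Hth Ha. apply C_complete. intros e He.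
  destruct (small_geo M th (e/2) Hth ltac:(lra)) as [K HK]. exists K. intros n m Hn Hm.
  pose proof (psum_tail a M th K n Hth Ha Hn). pose proof (psum_tail a M th K m Hth Ha Hm).
  pose proof (Cnorm_sub_tri (Csum a n) (Csum a K) (Csum a m)). rewrite (Cnorm_sub (Csum a K)) in H1. lra. Qed.

Lemma Cser_tail : forall a l M th K, 0 <= th < 1 -> (forall k, Cnorm (a k) <= M * th ^ k) -> Cser a l ->
  Cnorm (Csub l (Csum a K)) <= M * th ^ (S K) / (1 - th).
Proof. intros. apply (Ccv_norm_le (Csum a) l (Csum a K) _ K H1). intros; apply psum_tail; auto. Qed.

Lemma Cser_bound : forall a l M th, 0 <= th < 1 -> (forall k, Cnorm (a k) <= M * th ^ k) -> Cser a l ->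
  Cnorm l <= M / (1 - th).
Proof. intros. pose proof (Cser_tail a l M th 0 H H0 H1). simpl in H2. specialize (H0 0%nat). simpl in H0.
  pose proof (Cnorm_triangle (Csub l (a 0%nat)) (a 0%nat)). replace (Cadd (Csub l (a 0%nat)) (a 0%nat)) with l in H3 by cx.
  pose proof (M_nonneg a M th). apply Rle_trans with (M * (th * 1) / (1 - th) + M * 1). lra.
  right. field. lra. Qed.

Lemma Cser_dct : forall (f : nat -> nat -> Cplx) g L Lg M th, 0 <= th < 1 ->
  (forall N k, Cnorm (f N k) <= M * th ^ k) -> (forall k, Ccv (fun N => f N k) (g k)) ->
  (forall N, Cser (f N) (L N)) -> Cser g Lg -> Ccv L Lg.
Proof. intros f g L Lg M th Hth Hd Hp HL Hg e He.
  assert (Hgd : forall k, Cnorm (g k) <= M * th ^ k).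
  { intro k. replace (g k) with (Csub (g k) Czero) by cx. apply (Ccv_norm_le (fun N => f N k) _ _ _ 0%nat (Hp k)).
    intros. replace (Csub (f n k) Czero) with (f n k) by cx. auto. }
  destruct (small_geo M th (e/3) Hth ltac:(lra)) as [K HK].
  pose proof (Ccv_Csum f g K Hp) as Hs. destruct (Hs (e/3) ltac:(lra)) as [N HN]. exists N. intros n Hn.
  pose proof (Cser_tail (f n) (L n) M th K Hth (Hd n) (HL n)) as T1.
  pose proof (Cser_tail g Lg M th K Hth Hgd Hg) as T2. specialize (HN n Hn).
  pose proof (Cnorm_sub_tri (L n) (Csum (f n) K) Lg) as T3.
  pose proof (Cnorm_sub_tri (Csum (f n) K) (Csum g K) Lg) as T4. rewrite (Cnorm_sub (Csum g K)) in T4.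
  lra. Qed.

Fixpoint Rprod (f : nat -> R) (n : nat) : R := match n with O => 1 | S k => Rprod f k * f k end.
Fixpoint Rsum (f : nat -> R) (n : nat) : R := match n with O => 0 | S k => Rsum f k + f k end.

Lemma Rprod_split : forall f K m, Rprod f (K + m) = Rprod f K * Rprod (fun i => f (K + i)%nat) m.
Proof. intros f K m; induction m; simpl. rewrite Nat.add_0_r; ring. rewrite Nat.add_succ_r; simpl. rewrite IHm; ring. Qed.

Lemma Rprod_pos : forall f n, (forall j, 0 < f j) -> 0 < Rprod f n.
Proof. intros f n H; induction n; simpl. lra. apply Rmult_lt_0_compat; auto. Qed.

Lemma Rprod_nonneg : forall f n, (forall j, 0 <= f j) -> 0 <= Rprod f n.
Proof. intros f n H; induction n; simpl. lra. apply Rmult_le_pos; auto. Qed.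

Lemma Rprod_decr : forall f n m, (forall j, 0 <= f j <= 1) -> (n <= m)%nat -> Rprod f m <= Rprod f n.
Proof. intros f n m H Hnm. induction Hnm. lra. simpl. pose proof (H m).
  pose proof (Rprod_nonneg f m ltac:(intro j; specialize (H j); lra)). nra. Qed.

Lemma weierstrass : forall a n, (forall j, 0 <= a j <= 1) -> 1 - Rsum a n <= Rprod (fun j => 1 - a j) n.
Proof. intros a n H; induction n; simpl. lra. specialize (H n) as Hn.
  pose proof (Rprod_nonneg (fun j => 1 - a j) n ltac:(intro j; specialize (H j); lra)).
  assert (0 <= Rsum a n). { clear IHn H0. induction n; simpl. lra. specialize (H n); lra. }
  nra. Qed.

Lemma Rsum_geo : forall s r K m, r <> 1 -> Rsum (fun i => s * r ^ (K + i)) m = s * r ^ K * (1 - r ^ m) / (1 - r).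
Proof. intros s r K m Hr. induction m; simpl. field; lra. rewrite IHm. rewrite pow_add. field. lra. Qed.

Lemma prod_lower : forall s r, 0 <= s < 1 -> 0 <= r < 1 ->
  exists c, 0 < c /\ forall n, c <= Rprod (fun j => 1 - s * r ^ j) n.
Proof. intros s r Hs Hr.
  assert (Hf : forall j, 0 < 1 - s * r ^ j).
  { intro j. pose proof (pow_le1 r j ltac:(lra)). assert (0 <= r ^ j) by (apply pow_le; lra). nra. }
  destruct (small_geo s r (1/2) Hr ltac:(lra)) as [K HK].
  exists (Rprod (fun j => 1 - s * r ^ j) (S K) / 2). split.
  { apply Rdiv_lt_0_compat. apply Rprod_pos; auto. lra. }
  intro n. set (P := Rprod (fun j => 1 - s * r ^ j) (S K)).
  assert (HP : 0 < P) by (apply Rprod_pos; auto).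
  assert (Hf1 : forall j, 0 <= 1 - s * r ^ j <= 1).
  { intro j. specialize (Hf j). assert (0 <= r ^ j) by (apply pow_le; lra). nra. }
  destruct (le_lt_dec n (S K)).
  - pose proof (Rprod_decr _ n (S K) Hf1 l). fold P in H. lra.
  - replace n with (S K + (n - S K))%nat by lia. rewrite Rprod_split. fold P.
    assert (1/2 <= Rprod (fun i => 1 - s * r ^ (S K + i)) (n - S K)).
    { eapply Rle_trans; [|apply (weierstrass (fun i => s * r ^ (S K + i)))].
      rewrite Rsum_geo by lra. assert (0 <= r ^ (n - S K)) by (apply pow_le; lra).
      assert (0 <= s * r ^ S K) by (apply Rmult_le_pos; [lra|apply pow_le; lra]).
      assert (s * r ^ S K * (1 - r ^ (n - S K)) / (1 - r) <= s * r ^ S K / (1 - r)).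
      { unfold Rdiv. apply Rmult_le_compat_r. apply Rlt_le, Rinv_0_lt_compat; lra. nra. }
      lra.
      intro j. specialize (Hf1 (S K + j)%nat). assert (0 <= r ^ (S K + j)) by (apply pow_le; lra). nra. }
    nra. Qed.

Lemma Rsum_nonneg : forall f n, (forall k, 0 <= f k) -> 0 <= Rsum f n.
Proof. intros f n H; induction n; simpl. lra. specialize (H n); lra. Qed.

Lemma Rsum_ge_term : forall f n k, (forall k, 0 <= f k) -> (k < n)%nat -> f k <= Rsum f n.
Proof. intros f n k H Hk. induction Hk; simpl. pose proof (Rsum_nonneg f k H). lra.
  specialize (H m). lra. Qed.

Lemma ratio_geo : forall (a : nat -> R) th K, 0 < th -> (forall k, 0 <= a k) ->
  (forall k, (k >= K)%nat -> a (S k) <= th * a k) -> exists M, forall k, a k <= M * th ^ k.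
Proof. intros a th K Hth Ha Hr.
  exists (Rsum (fun k => a k / th ^ k) (S K)).
  assert (Hnn : forall k, 0 <= a k / th ^ k).
  { intro k. apply Rmult_le_pos; auto. apply Rlt_le, Rinv_0_lt_compat, pow_lt; auto. }
  assert (Hs : forall k, (k <= K)%nat -> a k / th ^ k <= Rsum (fun k => a k / th ^ k) (S K)).
  { intros k Hk. apply (Rsum_ge_term (fun k => a k / th ^ k)); auto; lia. }
  set (M := Rsum (fun k => a k / th ^ k) (S K)) in *.
  assert (Hk : forall k, (k <= K)%nat -> a k <= M * th ^ k).
  { intros k Hk. specialize (Hs k Hk). pose proof (pow_lt th k Hth).
    replace (a k) with (a k / th ^ k * th ^ k) by (field; lra). apply Rmult_le_compat_r; lra. }
  intro k. destruct (le_lt_dec k K). auto.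
  induction k. lia. destruct (Nat.eq_dec k K). subst. specialize (Hr K ltac:(lia)). specialize (Hk K ltac:(lia)).
  simpl. nra. specialize (IHk ltac:(lia)). specialize (Hr k ltac:(lia)). simpl. nra. Qed.

Lemma qpoch_low : forall a p n, (forall j, 0 <= 1 - Cnorm a * Cnorm p ^ j) ->
  Rprod (fun j => 1 - Cnorm a * Cnorm p ^ j) n <= Cnorm (qpoch a p n).
Proof. intros a p n H. induction n; simpl. rewrite Cnorm_one; lra.
  rewrite Cnorm_mul. pose proof (Cnorm_rev Cone (Copp (Cmul a (Cpow p n)))).
  rewrite Cnorm_opp, Cnorm_one, Cnorm_mul, Cnorm_pow in H0. unfold Csub.
  pose proof (Rprod_nonneg (fun j => 1 - Cnorm a * Cnorm p ^ j) n H). specialize (H n).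
  apply Rmult_le_compat; auto. Qed.

Lemma qpoch_up : forall a p n, (forall j, 0 <= 1 - Cnorm a * Cnorm p ^ j) ->
  Cnorm (qpoch a p n) * Rprod (fun j => 1 - Cnorm a * Cnorm p ^ j) n <= 1.
Proof. intros a p n H. induction n; simpl. rewrite Cnorm_one; lra.
  rewrite Cnorm_mul. pose proof (Cnorm_triangle Cone (Copp (Cmul a (Cpow p n)))).
  rewrite Cnorm_opp, Cnorm_one, Cnorm_mul, Cnorm_pow in H0. fold (Csub Cone (Cmul a (Cpow p n))) in H0.
  pose proof (H n).
  set (x := Cnorm a * Cnorm p ^ n) in *. set (P := Rprod (fun j => 1 - Cnorm a * Cnorm p ^ j) n) in *.
  set (Q := Cnorm (qpoch a p n)) in *. set (y := Cnorm (Csub Cone (Cmul a (Cpow p n)))) in *.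
  assert (0 <= Q) by apply Cnorm_ge0. assert (0 <= y) by apply Cnorm_ge0.
  assert (0 <= P) by (unfold P; apply Rprod_nonneg; intro j; apply H).
  assert (Q * y * (P * (1 - x)) <= Q * P * ((1 + x) * (1 - x))).
  { replace (Q * y * (P * (1 - x))) with (Q * P * (y * (1 - x))) by ring.
    apply Rmult_le_compat_l. apply Rmult_le_pos; auto. apply Rmult_le_compat_r; lra. }
  assert (0 <= x). { unfold x. apply Rmult_le_pos. apply Cnorm_ge0. apply pow_le, Cnorm_ge0. }
  assert (0 <= Q * P) by (apply Rmult_le_pos; auto).
  assert (Q * P * ((1 + x) * (1 - x)) <= Q * P) by nra. lra. Qed.

Lemma qpoch_lower_unif : forall s r, 0 <= s < 1 -> 0 <= r < 1 -> exists c, 0 < c /\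
  forall a p n, Cnorm a <= s -> Cnorm p <= r -> c <= Cnorm (qpoch a p n).
Proof. intros s r Hs Hr. destruct (prod_lower s r Hs Hr) as [c [Hc H]]. exists c. split; auto.
  intros a p n Ha Hp. eapply Rle_trans. apply (H n).
  assert (forall j, 0 <= Cnorm a * Cnorm p ^ j <= s * r ^ j).
  { intro j. pose proof (Cnorm_ge0 a). pose proof (Cnorm_ge0 p). assert (0 <= Cnorm p ^ j) by (apply pow_le; lra).
    split. nra. apply Rmult_le_compat; auto. apply pow_incr; lra. }
  eapply Rle_trans; [|apply qpoch_low].
  - clear H. induction n; simpl. lra. apply Rmult_le_compat; auto.
    apply Rprod_nonneg. intro j. specialize (H0 j). pose proof (pow_le1 r j ltac:(lra)). nra.
    specialize (H0 n). pose proof (pow_le1 r n ltac:(lra)). nra. specialize (H0 n). lra.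
  - intro j. specialize (H0 j). pose proof (pow_le1 r j ltac:(lra)). nra. Qed.

Lemma qpoch_ne0 : forall a p n, Cnorm a < 1 -> Cnorm p < 1 -> qpoch a p n <> Czero.
Proof. intros a p n Ha Hp E. destruct (qpoch_lower_unif (Cnorm a) (Cnorm p)) as [c [Hc H]].
  split; [apply Cnorm_ge0|auto]. split; [apply Cnorm_ge0|auto].
  specialize (H a p n (Rle_refl _) (Rle_refl _)). rewrite E, Cnorm_zero in H. lra. Qed.

Fixpoint tri (n : nat) : nat := match n with O => O | S k => (tri k + k)%nat end.

Lemma Cnorm_div : forall a b, b <> Czero -> Cnorm (Cdiv a b) = Cnorm a / Cnorm b.
Proof. intros. unfold Cdiv. rewrite Cnorm_mul, Cnorm_inv; auto. Qed.

Lemma Cpow_mul : forall a b k, Cpow (Cmul a b) k = Cmul (Cpow a k) (Cpow b k).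
Proof. intros a b k; induction k; simpl. cx. rewrite IHk. cx. Qed.

Lemma Cpow_pow : forall a m n, Cpow a (m * n) = Cpow (Cpow a m) n.
Proof. intros a m n. revert m; induction n; intros m. rewrite Nat.mul_0_r. reflexivity.
  rewrite Nat.mul_succ_r, Cpow_add, IHn. simpl. cx. Qed.

Lemma Cpow_zero : forall k, Cpow Czero (S k) = Czero.
Proof. intros. simpl. cx. Qed.

Lemma Cpow_ne0 : forall a k, a <> Czero -> Cpow a k <> Czero.
Proof. intros a k H E. assert (Cnorm (Cpow a k) = 0) by (rewrite E; apply Cnorm_zero).
  rewrite Cnorm_pow in H0. revert H0. apply pow_nonzero. intro E2. apply H, Cnorm_eq0; auto. Qed.

Lemma Cmul_ne0 : forall a b, a <> Czero -> b <> Czero -> Cmul a b <> Czero.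
Proof. intros a b Ha Hb E. assert (Cnorm (Cmul a b) = 0) by (rewrite E; apply Cnorm_zero).
  rewrite Cnorm_mul in H. apply Rmult_integral in H. destruct H; [apply Ha|apply Hb]; apply Cnorm_eq0; auto. Qed.

Lemma tri_dom : forall R r, 0 <= R -> 0 <= r < 1 -> exists M, forall k, R ^ k * r ^ tri k <= M * (/2) ^ k.
Proof. intros R r HR Hr.
  destruct (Rpow_cv0 r Hr (/ (2 * (R + 1)))) as [K HK]. { apply Rinv_0_lt_compat; lra. }
  apply (ratio_geo (fun k => R ^ k * r ^ tri k) (/2) K). lra.
  intro k. apply Rmult_le_pos; apply pow_le; lra.
  intros k Hk. simpl. rewrite pow_add. specialize (HK k Hk).
  assert (0 <= R ^ k) by (apply pow_le; lra). assert (0 <= r ^ tri k) by (apply pow_le; lra).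
  assert (0 <= r ^ k) by (apply pow_le; lra).
  assert (R * r ^ k <= /2).
  { apply Rle_trans with ((R + 1) * / (2 * (R + 1))). nra. right. field. lra. }
  replace (R * R ^ k * (r ^ tri k * r ^ k)) with ((R * r ^ k) * (R ^ k * r ^ tri k)) by ring.
  apply Rmult_le_compat_r. apply Rmult_le_pos; auto. auto. Qed.

Definition gterm (p x : Cplx) (k : nat) : Cplx :=
  Cdiv (Cmul (Cpow (Copp x) k) (Cpow p (tri k))) (qpoch p p k).

Lemma gterm_dom : forall p R, Cnorm p < 1 -> 0 <= R -> exists M, forall y k, Cnorm y <= R ->
  Cnorm (gterm p y k) <= M * (/2) ^ k.
Proof. intros p R Hp HR. pose proof (Cnorm_ge0 p).
  destruct (qpoch_lower_unif (Cnorm p) (Cnorm p)) as [c [Hc Hl]]; try lra.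
  destruct (tri_dom R (Cnorm p) HR ltac:(lra)) as [M HM]. exists (M / c). intros y k Hy.
  specialize (Hl p p k (Rle_refl _) (Rle_refl _)).
  assert (qpoch p p k <> Czero). { intro E; rewrite E, Cnorm_zero in Hl; lra. }
  unfold gterm. rewrite Cnorm_div, Cnorm_mul, !Cnorm_pow, Cnorm_opp by auto.
  specialize (HM k). assert (Cnorm y ^ k <= R ^ k) by (apply pow_incr; split; [apply Cnorm_ge0|auto]).
  assert (0 <= Cnorm p ^ tri k) by (apply pow_le; lra).
  assert (Cnorm y ^ k * Cnorm p ^ tri k <= M * (/2)^k) by nra.
  assert (0 <= Cnorm y ^ k * Cnorm p ^ tri k) by (apply Rmult_le_pos; auto; apply pow_le, Cnorm_ge0).
  unfold Rdiv. apply Rle_trans with (M * (/2)^k * / Cnorm (qpoch p p k)).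
  apply Rmult_le_compat_r; auto. apply Rlt_le, Rinv_0_lt_compat; lra.
  replace (M * / c * (/2)^k) with (M * (/2)^k * / c) by ring.
  assert (0 <= M * (/2)^k) by lra.
  apply Rmult_le_compat_l; auto. apply Rinv_le_contravar; auto. Qed.

Definition csum (f : nat -> Cplx) : Cplx := epsilon (inhabits Czero) (fun l => Cser f l).

Lemma csum_spec : forall f, (exists l, Cser f l) -> Cser f (csum f).
Proof. intros f H. unfold csum. apply (epsilon_spec (inhabits Czero) (fun l => Cser f l) H). Qed.

Lemma csum_gdom : forall f M th, 0 <= th < 1 -> (forall k, Cnorm (f k) <= M * th ^ k) -> Cser f (csum f).
Proof. intros. apply csum_spec. destruct (Cser_gdom f M th H H0) as [l Hl]. eauto. Qed.

Lemma csum_eq : forall f l, Cser f l -> csum f = l.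
Proof. intros. eapply Cser_unique; [apply csum_spec; eauto | auto]. Qed.

Definition G (p x : Cplx) : Cplx := csum (gterm p x).

Lemma G_ser : forall p x, Cnorm p < 1 -> Cser (gterm p x) (G p x).
Proof. intros p x Hp. destruct (gterm_dom p (Cnorm x) Hp (Cnorm_ge0 x)) as [M HM].
  apply (csum_gdom _ M (/2)). lra. intro k. apply HM. lra. Qed.

Lemma qpp_ne0 : forall p k, Cnorm p < 1 -> qpoch p p k <> Czero.
Proof. intros. apply qpoch_ne0; auto. Qed.

Lemma one_sub_ne0 : forall a, Cnorm a < 1 -> Csub Cone a <> Czero.
Proof. intros a H E. assert (Cone = a). { replace Cone with (Cadd (Csub Cone a) a) by cx. rewrite E. cx. }
  rewrite <- H0, Cnorm_one in H. lra. Qed.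

Lemma Cnorm_pow_lt1 : forall p k, Cnorm p < 1 -> Cnorm (Cpow p k) <= 1.
Proof. intros. rewrite Cnorm_pow. apply pow_le1. pose proof (Cnorm_ge0 p); lra. Qed.

Lemma pk_ne1 : forall p k, Cnorm p < 1 -> Csub Cone (Cmul p (Cpow p k)) <> Czero.
Proof. intros. apply one_sub_ne0. rewrite Cnorm_mul. pose proof (Cnorm_pow_lt1 p k H).
  pose proof (Cnorm_ge0 p). pose proof (Cnorm_ge0 (Cpow p k)). nra. Qed.

Lemma gterm_rec : forall p x k, Cnorm p < 1 ->
  gterm p x (S k) = Csub (gterm p (Cmul p x) (S k)) (Cmul x (gterm p (Cmul p x) k)).
Proof. intros p x k Hp. unfold gterm. simpl qpoch. simpl tri. rewrite Cpow_add.
  replace (Copp (Cmul p x)) with (Cmul p (Copp x)) by cx. rewrite !Cpow_mul.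
  pose proof (qpp_ne0 p k Hp). pose proof (pk_ne1 p k Hp).
  simpl Cpow. field. split; auto. Qed.

Lemma gterm0 : forall p x y, gterm p x 0 = gterm p y 0.
Proof. reflexivity. Qed.

Lemma G_fun : forall p x, Cnorm p < 1 -> G p x = Cmul (Csub Cone x) (G p (Cmul p x)).
Proof. intros p x Hp.
  pose proof (G_ser p (Cmul p x) Hp) as H1.
  pose proof (Cser_add _ _ _ _ H1 (Cser_scal _ _ (Copp x) (Cser_prep Czero _ _ H1))) as H2.
  apply (Cser_unique (gterm p x)). apply G_ser; auto.
  replace (Cmul (Csub Cone x) (G p (Cmul p x))) with
    (Cadd (G p (Cmul p x)) (Cmul (Copp x) (Cadd Czero (G p (Cmul p x))))) by ring.
  eapply Cser_ext; [|exact H2]. intros [|k]; simpl prep.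
  - rewrite (gterm0 p (Cmul p x) x). ring.
  - rewrite (gterm_rec p x k) by auto. ring. Qed.

Lemma G_iter : forall p x N, Cnorm p < 1 -> G p x = Cmul (qpoch x p N) (G p (Cmul (Cpow p N) x)).
Proof. intros p x N Hp. induction N. simpl. replace (Cmul Cone x) with x by ring. ring.
  rewrite IHN. rewrite (G_fun p (Cmul (Cpow p N) x)) by auto. simpl.
  replace (Cmul p (Cmul (Cpow p N) x)) with (Cmul (Cmul p (Cpow p N)) x) by ring. ring. Qed.

Lemma Ccv_pow_seq : forall u l k, Ccv u l -> Ccv (fun N => Cpow (u N) k) (Cpow l k).
Proof. intros u l k H. induction k; simpl. apply Ccv_const. apply Ccv_mul; auto. Qed.

Lemma Cser_delta : Cser (fun k => match k with O => Cone | S _ => Czero end) Cone.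
Proof. unfold Cser. apply (Ccv_ext (fun _ => Cone)). intro n. induction n; simpl; auto. rewrite <- IHn. ring.
  apply Ccv_const. Qed.

Lemma Ccv_geo_x : forall p x, Cnorm p < 1 -> Ccv (fun N => Cmul (Cpow p N) x) Czero.
Proof. intros. apply (Ccv_ext (fun N => Cmul x (Cpow p N))). intros; ring.
  replace Czero with (Cmul x Czero) by ring. apply Ccv_scal. apply Ccv_pow0; auto. Qed.

Lemma G_lim1 : forall p x, Cnorm p < 1 -> Ccv (fun N => G p (Cmul (Cpow p N) x)) Cone.
Proof. intros p x Hp. destruct (gterm_dom p (Cnorm x) Hp (Cnorm_ge0 x)) as [M HM].
  apply (Cser_dct (fun N k => gterm p (Cmul (Cpow p N) x) k) (fun k => match k with O => Cone | S _ => Czero end)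
    _ _ M (/2)). lra.
  - intros N k. apply HM. rewrite Cnorm_mul. pose proof (Cnorm_pow_lt1 p N Hp). pose proof (Cnorm_ge0 x).
    pose proof (Cnorm_ge0 (Cpow p N)). nra.
  - intros k. apply (Ccv_ext (fun N => Cmul (Cpow (Copp (Cmul (Cpow p N) x)) k) (Cdiv (Cpow p (tri k)) (qpoch p p k)))).
    intros N; unfold gterm; unfold Cdiv; ring.
    replace (match k with O => Cone | S _ => Czero end) with (Cmul (Cpow (Copp Czero) k) (Cdiv (Cpow p (tri k)) (qpoch p p k))).
    apply (Ccv_mul (fun N => Cpow (Copp (Cmul (Cpow p N) x)) k) (fun _ => _)). apply Ccv_pow_seq.
    replace (Copp Czero) with (Copp Czero) by reflexivity. apply Ccv_opp. apply Ccv_geo_x; auto. apply Ccv_const.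
    destruct k. simpl. unfold Cdiv. replace (Cinv Cone) with Cone by (field; intro E; injection E; lra). ring.
    simpl. ring.
  - intros N. apply G_ser; auto.
  - apply Cser_delta. Qed.

Lemma G_prod : forall p x, Cnorm p < 1 -> Ccv (qpoch x p) (G p x).
Proof. intros p x Hp. pose proof (G_lim1 p x Hp) as H. destruct (H (1/2) ltac:(lra)) as [K HK].
  apply (Ccv_ext_ev (fun N => Cmul (G p x) (Cinv (G p (Cmul (Cpow p N) x)))) _ _ K).
  - intros n Hn. specialize (HK n Hn). assert (G p (Cmul (Cpow p n) x) <> Czero).
    { intro E. rewrite E in HK. replace (Csub Czero Cone) with (Copp Cone) in HK by ring.
      rewrite Cnorm_opp, Cnorm_one in HK. lra. }
    rewrite (G_iter p x n Hp) at 1. field. auto.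
  - assert (Hi : Cinv Cone = Cone) by (field; intro E; injection E; lra).
    pose proof (Ccv_scal _ _ (G p x) (Ccv_inv _ _ H ltac:(intro E; injection E; lra))) as H2.
    rewrite Hi in H2. replace (Cmul (G p x) Cone) with (G p x) in H2 by ring. exact H2. Qed.

Lemma G_ne0 : forall p x, Cnorm p < 1 -> Cnorm x < 1 -> G p x <> Czero.
Proof. intros p x Hp Hx E. destruct (qpoch_lower_unif (Cnorm x) (Cnorm p)) as [c [Hc Hl]].
  split; [apply Cnorm_ge0|auto]. split; [apply Cnorm_ge0|auto].
  pose proof (Ccv_norm_ge _ _ c (G_prod p x Hp) (fun n => Hl x p n (Rle_refl _) (Rle_refl _))).
  rewrite E, Cnorm_zero in H. lra. Qed.

Definition uterm (p z : Cplx) (k : nat) : Cplx := Cmul (Cpow (Copp z) k) (Cpow p (tri k)).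
Definition tp (p b z : Cplx) (k : nat) : Cplx := Cdiv (uterm p z k) (qpoch b p k).
Fixpoint NP (p b : Cplx) (n : nat) : Cplx :=
  match n with O => Cone | S k => Cmul (NP p b k) (Csub (Cpow p (S k)) b) end.
Definition tm (p b z : Cplx) (m : nat) : Cplx := Cmul (Cpow (Copp (Cinv z)) (S m)) (NP p b (S m)).

Lemma qpoch_shift : forall b p k, qpoch b p (S k) = Cmul (Csub Cone b) (qpoch (Cmul b p) p k).
Proof. intros b p k; induction k. simpl. ring.
  change (qpoch b p (S (S k))) with (Cmul (qpoch b p (S k)) (Csub Cone (Cmul b (Cpow p (S k))))).
  rewrite IHk. simpl. ring. Qed.

Lemma NP_shift : forall p b n, NP p (Cmul b p) (S n) = Cmul (Cpow p (S n)) (Cmul (Csub Cone b) (NP p b n)).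
Proof. intros p b n; induction n. simpl. ring.
  change (NP p (Cmul b p) (S (S n))) with (Cmul (NP p (Cmul b p) (S n)) (Csub (Cpow p (S (S n))) (Cmul b p))).
  rewrite IHn. simpl. ring. Qed.

Lemma uterm_S : forall p z k, uterm p z (S k) = Cmul (Copp z) (Cmul (Cpow p k) (uterm p z k)).
Proof. intros. unfold uterm. simpl tri. rewrite Cpow_add. simpl. ring. Qed.

Lemma Rplus_rec : forall p b z k, z <> Czero -> qpoch b p (S k) <> Czero -> Csub Cone b <> Czero ->
  tp p b z k = Cadd (Cdiv (tp p (Cmul b p) z k) (Csub Cone b)) (Cmul (Cdiv b z) (tp p b z (S k))).
Proof. intros p b z k Hz Hq Hb. unfold tp. rewrite uterm_S.
  assert (Hq2 : qpoch (Cmul b p) p k <> Czero).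
  { intro E. apply Hq. rewrite qpoch_shift, E. ring. }
  assert (Hq3 : qpoch b p k <> Czero). { intro E. apply Hq. simpl. rewrite E. ring. }
  assert (Hq4 : Csub Cone (Cmul b (Cpow p k)) <> Czero). { intro E. apply Hq. simpl. rewrite E. ring. }
  pose proof (qpoch_shift b p k) as Hs. simpl in Hs.
  assert (E1 : qpoch (Cmul b p) p k = Cdiv (Cmul (qpoch b p k) (Csub Cone (Cmul b (Cpow p k)))) (Csub Cone b)).
  { rewrite Hs. field. auto. }
  rewrite E1. simpl qpoch. field. repeat split; auto. Qed.

Lemma Rminus1_rec : forall p b z, z <> Czero -> Csub Cone b <> Czero ->
  tm p b z 0 = Cadd (Cdiv (tm p (Cmul b p) z 0) (Csub Cone b)) (Cmul (Cdiv b z) (tp p b z 0)).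
Proof. intros p b z Hz Hb. unfold tm, tp, uterm. simpl. unfold Cdiv.
  replace (Cinv Cone) with Cone by (field; intro E; injection E; lra). field. auto. Qed.

Lemma Rminus_rec : forall p b z m, z <> Czero -> Csub Cone b <> Czero ->
  tm p b z (S m) = Cadd (Cdiv (tm p (Cmul b p) z (S m)) (Csub Cone b)) (Cmul (Cdiv b z) (tm p b z m)).
Proof. intros p b z m Hz Hb. unfold tm. rewrite (NP_shift p b (S m)).
  change (NP p b (S (S m))) with (Cmul (NP p b (S m)) (Csub (Cpow p (S (S m))) b)).
  change (Cpow (Copp (Cinv z)) (S (S m))) with (Cmul (Copp (Cinv z)) (Cpow (Copp (Cinv z)) (S m))).
  unfold Cdiv. field. auto. Qed.

Lemma SR : forall p b z A B A' B', z <> Czero -> Csub Cone b <> Czero -> (forall k, qpoch b p k <> Czero) ->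
  Cser (tp p b z) A -> Cser (tm p b z) B -> Cser (tp p (Cmul b p) z) A' -> Cser (tm p (Cmul b p) z) B' ->
  Cmul (Cadd A B) (Cmul (Csub Cone b) (Csub Cone (Cdiv b z))) = Cadd A' B'.
Proof. intros p b z A B A' B' Hz Hb Hq HA HB HA' HB'.
  assert (EA : A = Cadd (Cmul (Cinv (Csub Cone b)) A') (Cmul (Cdiv b z) (Csub A (tp p b z 0)))).
  { apply (Cser_unique (tp p b z)); auto.
    eapply Cser_ext; [|apply (Cser_add _ _ _ _ (Cser_scal _ _ (Cinv (Csub Cone b)) HA') (Cser_scal _ _ (Cdiv b z) (Cser_shift _ _ HA)))].
    intro k. cbv beta. rewrite (Rplus_rec p b z k); auto. unfold Cdiv. ring. }
  assert (EB : B = Cadd (Cmul (Cinv (Csub Cone b)) B') (Cmul (Cdiv b z) (Cadd (tp p b z 0) B))).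
  { apply (Cser_unique (tm p b z)); auto.
    eapply Cser_ext; [|apply (Cser_add _ _ _ _ (Cser_scal _ _ (Cinv (Csub Cone b)) HB') (Cser_scal _ _ (Cdiv b z) (Cser_prep (tp p b z 0) _ _ HB)))].
    intros [|m]; cbv beta; simpl prep.
    - rewrite (Rminus1_rec p b z); auto. unfold Cdiv. ring.
    - rewrite (Rminus_rec p b z m); auto. unfold Cdiv. ring. }
  assert (XA : Cmul (Cinv (Csub Cone b)) A' = Csub A (Cmul (Cdiv b z) (Csub A (tp p b z 0)))). { rewrite EA at 1. ring. }
  assert (XB : Cmul (Cinv (Csub Cone b)) B' = Csub B (Cmul (Cdiv b z) (Cadd (tp p b z 0) B))). { rewrite EB at 1. ring. }
  replace A' with (Cmul (Csub Cone b) (Cmul (Cinv (Csub Cone b)) A')) by (field; auto).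
  replace B' with (Cmul (Csub Cone b) (Cmul (Cinv (Csub Cone b)) B')) by (field; auto).
  rewrite XA, XB. ring. Qed.

Lemma Ccv_eq : forall u l l', Ccv u l -> l = l' -> Ccv u l'.
Proof. intros; subst; auto. Qed.

Lemma tp_dom : forall p z bb, Cnorm p < 1 -> 0 <= bb < 1 -> exists M, forall b' k, Cnorm b' <= bb ->
  Cnorm (tp p b' z k) <= M * (/2) ^ k.
Proof. intros p z bb Hp Hbb. pose proof (Cnorm_ge0 p).
  destruct (qpoch_lower_unif bb (Cnorm p)) as [c [Hc Hl]]; try lra.
  destruct (tri_dom (Cnorm z) (Cnorm p) (Cnorm_ge0 z) ltac:(lra)) as [M HM]. exists (M / c). intros y k Hy.
  specialize (Hl y p k Hy (Rle_refl _)).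
  assert (qpoch y p k <> Czero). { intro E; rewrite E, Cnorm_zero in Hl; lra. }
  unfold tp, uterm. rewrite Cnorm_div by auto. rewrite Cnorm_mul, !Cnorm_pow, Cnorm_opp.
  specialize (HM k).
  assert (0 <= Cnorm z ^ k * Cnorm p ^ tri k) by (apply Rmult_le_pos; apply pow_le; auto; apply Cnorm_ge0).
  unfold Rdiv. apply Rle_trans with (M * (/2)^k * / Cnorm (qpoch y p k)).
  apply Rmult_le_compat_r; auto. apply Rlt_le, Rinv_0_lt_compat; lra.
  replace (M * / c * (/2)^k) with (M * (/2)^k * / c) by ring.
  assert (0 <= M * (/2)^k) by lra.
  apply Rmult_le_compat_l; auto. apply Rinv_le_contravar; auto. Qed.

Lemma NP_bound : forall p b' bb n, Cnorm b' <= bb ->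
  Cnorm (NP p b' n) <= Rprod (fun j => Cnorm p ^ (S j) + bb) n.
Proof. intros p b' bb n Hb. induction n; simpl. rewrite Cnorm_one; lra.
  rewrite Cnorm_mul. apply Rmult_le_compat; auto. apply Cnorm_ge0. apply Cnorm_ge0.
  unfold Csub. eapply Rle_trans. apply Cnorm_triangle. rewrite Cnorm_opp, Cnorm_mul, Cnorm_pow. simpl. lra. Qed.

Lemma tm_dom : forall p z bb, Cnorm p < 1 -> z <> Czero -> 0 <= bb -> bb * Cnorm (Cinv z) < 1 ->
  exists M th, 0 <= th < 1 /\ forall b' m, Cnorm b' <= bb -> Cnorm (tm p b' z m) <= M * th ^ m.
Proof. intros p z bb Hp Hz Hbb Hw. set (W := Cnorm (Cinv z)) in *.
  assert (HW : 0 < W). { unfold W. rewrite Cnorm_inv by auto. apply Rinv_0_lt_compat, Cnorm_pos; auto. }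
  pose proof (Cnorm_ge0 p).
  set (f := fun j => Cnorm p ^ (S j) + bb).
  assert (Hf : forall j, 0 <= f j). { intro j. unfold f. assert (0 <= Cnorm p ^ S j) by (apply pow_le; lra). lra. }
  set (th := (1 + bb * W) / 2).
  destruct (Rpow_cv0 (Cnorm p) ltac:(lra) ((1 - bb * W) / (2 * (W + 1)))) as [K HK].
  { apply Rdiv_lt_0_compat; lra. }
  destruct (ratio_geo (fun m => W ^ (S m) * Rprod f (S m)) th K) as [M HM].
  - unfold th. nra.
  - intro k. apply Rmult_le_pos. apply pow_le; lra. apply Rprod_nonneg; auto.
  - intros m Hm. specialize (HK (S (S m)) ltac:(lia)).
    change (Rprod f (S (S m))) with (Rprod f (S m) * f (S m)).
    assert (0 <= W ^ S m * Rprod f (S m)) by (apply Rmult_le_pos; [apply pow_le; lra|apply Rprod_nonneg; auto]).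
    replace (W ^ S (S m) * (Rprod f (S m) * f (S m))) with ((W * f (S m)) * (W ^ S m * Rprod f (S m))) by (simpl; ring).
    apply Rmult_le_compat_r; auto. unfold f, th.
    assert (W * Cnorm p ^ S (S m) <= (1 - bb * W) / 2).
    { apply Rle_trans with (W * ((1 - bb * W) / (2 * (W + 1)))). apply Rmult_le_compat_l; lra.
      apply Rle_trans with ((W + 1) * ((1 - bb * W) / (2 * (W + 1)))).
      apply Rmult_le_compat_r. apply Rlt_le, Rdiv_lt_0_compat; lra. lra. right; field; lra. }
    nra.
  - exists M, th. split. unfold th; nra. intros b' m Hb. eapply Rle_trans; [|apply HM].
    unfold tm. rewrite Cnorm_mul, Cnorm_pow, Cnorm_opp. fold W. apply Rmult_le_compat_l. apply pow_le; lra.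
    apply NP_bound; auto. Qed.

Lemma tp_ser : forall p b z, Cnorm p < 1 -> Cnorm b < 1 -> Cser (tp p b z) (csum (tp p b z)).
Proof. intros. destruct (tp_dom p z (Cnorm b) H) as [M HM]. split; [apply Cnorm_ge0|auto].
  apply (csum_gdom _ M (/2)). lra. intro k. apply HM. lra. Qed.

Lemma tm_ser : forall p b z, Cnorm p < 1 -> z <> Czero -> Cnorm b * Cnorm (Cinv z) < 1 -> Cser (tm p b z) (csum (tm p b z)).
Proof. intros. destruct (tm_dom p z (Cnorm b) H H0 (Cnorm_ge0 b) H1) as [M [th [Hth HM]]].
  apply (csum_gdom _ M th). auto. intro k. apply HM. lra. Qed.

Lemma qpoch_zero : forall p k, qpoch Czero p k = Cone.
Proof. intros p k; induction k; simpl; auto. rewrite IHk. ring. Qed.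

Lemma qpoch_cv : forall y p k, Ccv y Czero -> Ccv (fun N => qpoch (y N) p k) Cone.
Proof. intros y p k H. induction k; simpl. apply Ccv_const.
  eapply Ccv_eq. apply Ccv_mul; [exact IHk|]. apply Ccv_sub. apply Ccv_const.
  apply (Ccv_ext (fun N => Cmul (Cpow p k) (y N))). intros; ring. apply Ccv_scal; eauto. ring. Qed.

Lemma NP_cv : forall y p n, Ccv y Czero -> Ccv (fun N => NP p (y N) n) (NP p Czero n).
Proof. intros y p n H. induction n; simpl. apply Ccv_const.
  apply Ccv_mul; [exact IHn|]. eapply Ccv_eq. apply Ccv_sub. apply Ccv_const. eauto. ring. Qed.

Definition Tz (p z : Cplx) : Cplx := Cadd (csum (tp p Czero z)) (csum (tm p Czero z)).
Definition Ub (p b z : Cplx) : Cplx := Cadd (csum (tp p b z)) (csum (tm p b z)).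

Lemma Cnorm_pN_b : forall p b N, Cnorm p < 1 -> Cnorm (Cmul (Cpow p N) b) <= Cnorm b.
Proof. intros. rewrite Cnorm_mul. pose proof (Cnorm_pow_lt1 p N H). pose proof (Cnorm_ge0 b).
  pose proof (Cnorm_ge0 (Cpow p N)). nra. Qed.

Lemma ML : forall p b z, Cnorm p < 1 -> z <> Czero -> Cnorm b < 1 -> Cnorm b * Cnorm (Cinv z) < 1 ->
  Cmul (Ub p b z) (Cmul (G p b) (G p (Cdiv b z))) = Tz p z.
Proof. intros p b z Hp Hz Hb Hbz.
  set (bN := fun N => Cmul (Cpow p N) b).
  assert (HbN : forall N, Cnorm (bN N) <= Cnorm b) by (intro; apply Cnorm_pN_b; auto).
  assert (HbN1 : forall N, Cnorm (bN N) < 1) by (intro N; specialize (HbN N); lra).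
  assert (HbNz : forall N, Cnorm (bN N) * Cnorm (Cinv z) < 1).
  { intro N. specialize (HbN N). pose proof (Cnorm_ge0 (Cinv z)). nra. }
  assert (Hstep : forall N, bN (S N) = Cmul (bN N) p) by (intro; unfold bN; simpl; ring).
  assert (Hit : forall N, Cmul (Ub p b z) (Cmul (qpoch b p N) (qpoch (Cdiv b z) p N)) = Ub p (bN N) z).
  { induction N.
    - simpl. unfold bN. simpl. replace (Cmul Cone b) with b by ring. ring.
    - rewrite Hstep. unfold Ub at 2. rewrite <- (SR p (bN N) z (csum (tp p (bN N) z)) (csum (tm p (bN N) z))
         (csum (tp p (Cmul (bN N) p) z)) (csum (tm p (Cmul (bN N) p) z))); auto.
      + fold (Ub p (bN N) z). rewrite <- IHN. simpl. unfold bN, Cdiv. ring.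
      + apply one_sub_ne0; auto.
      + intro k. apply qpoch_ne0; auto.
      + apply tp_ser; auto.
      + apply tm_ser; auto.
      + rewrite <- Hstep. apply tp_ser; auto.
      + rewrite <- Hstep. apply tm_ser; auto. }
  assert (Hlim : Ccv (fun N => Ub p (bN N) z) (Tz p z)).
  { apply Ccv_add.
    - destruct (tp_dom p z (Cnorm b) Hp) as [M HM]. split; [apply Cnorm_ge0|auto].
      apply (Cser_dct (fun N k => tp p (bN N) z k) (tp p Czero z) _ _ M (/2)). lra.
      + intros N k. apply HM; auto.
      + intro k. unfold tp, Cdiv. eapply Ccv_eq. apply Ccv_scal. apply Ccv_inv. apply qpoch_cv.
        apply Ccv_geo_x; auto. intro E; injection E; lra. rewrite qpoch_zero. reflexivity.
      + intro N. apply tp_ser; auto.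
      + apply tp_ser; auto. rewrite Cnorm_zero; lra.
    - destruct (tm_dom p z (Cnorm b) Hp Hz (Cnorm_ge0 b) Hbz) as [M [th [Hth HM]]].
      apply (Cser_dct (fun N k => tm p (bN N) z k) (tm p Czero z) _ _ M th). auto.
      + intros N k. apply HM; auto.
      + intro k. unfold tm. apply Ccv_scal. apply NP_cv. apply Ccv_geo_x; auto.
      + intro N. apply tm_ser; auto.
      + apply tm_ser; auto. rewrite Cnorm_zero; pose proof (Cnorm_ge0 (Cinv z)); lra. }
  eapply Ccv_unique; [|exact Hlim].
  apply (Ccv_ext _ _ _ Hit). apply Ccv_scal. apply Ccv_mul; apply G_prod; auto. Qed.

Lemma RtoC_plus : forall x y, RtoC (x + y) = Cadd (RtoC x) (RtoC y).
Proof. intros. apply Cplx_ext; simpl; ring. Qed.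
Lemma RtoC_one : RtoC 1 = Cone.
Proof. reflexivity. Qed.
Lemma RtoC_mul : forall x y, RtoC (x * y) = Cmul (RtoC x) (RtoC y).
Proof. intros. apply Cplx_ext; simpl; ring. Qed.

Lemma Csum_const : forall c N, Csum (fun _ => c) N = Cmul (RtoC (INR (S N))) c.
Proof. intros c N; induction N. simpl. replace (RtoC 1) with Cone by reflexivity. ring.
  simpl Csum. rewrite IHN. rewrite (S_INR (S N)), RtoC_plus, RtoC_one. ring. Qed.

Lemma Csum_sub : forall a b n, Csum (fun k => Csub (a k) (b k)) n = Csub (Csum a n) (Csum b n).
Proof. intros a b n; induction n; simpl; auto. rewrite IHn. ring. Qed.

Lemma Csum_norm : forall d N, Cnorm (Csum d N) <= Rsum (fun M => Cnorm (d M)) (S N).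
Proof. intros d N; induction N; simpl. lra. eapply Rle_trans. apply Cnorm_triangle. simpl in IHN. lra. Qed.

Lemma inv_INR_mul : forall N, Cmul (RtoC (/ INR (S N))) (RtoC (INR (S N))) = Cone.
Proof. intros. rewrite <- RtoC_mul. rewrite Rinv_l. reflexivity. apply not_0_INR; lia. Qed.

Lemma Cnorm_mean : forall N X, Cnorm (Cmul (RtoC (/ INR (S N))) X) = / INR (S N) * Cnorm X.
Proof. intros. rewrite Cnorm_mul, Cnorm_RtoC. rewrite Rabs_right. auto.
  apply Rle_ge, Rlt_le, Rinv_0_lt_compat, lt_0_INR; lia. Qed.

Lemma Rsum_tail_bound : forall f K e, (forall M, (M >= K)%nat -> f M <= e) ->
  forall n, Rsum f (K + n) <= Rsum f K + INR n * e.
Proof. intros f K e H n; induction n. rewrite Nat.add_0_r. simpl. lra.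
  rewrite Nat.add_succ_r. simpl Rsum. rewrite S_INR. specialize (H (K+n)%nat ltac:(lia)). lra. Qed.

Lemma cesaro_reg : forall P L, Ccv P L -> Ccv (fun N => Cmul (RtoC (/ INR (S N))) (Csum P N)) L.
Proof. intros P L H e He.
  destruct (H (e/3) ltac:(lra)) as [K HK].
  set (C := Rsum (fun M => Cnorm (Csub (P M) L)) K).
  assert (HC : 0 <= C). { unfold C. apply Rsum_nonneg. intro; apply Cnorm_ge0. }
  destruct (INR_archimed (e/3) C ltac:(lra)) as [N0 HN0].
  exists (N0 + K)%nat. intros N HN.
  replace (Csub (Cmul (RtoC (/ INR (S N))) (Csum P N)) L) with
    (Cmul (RtoC (/ INR (S N))) (Csum (fun M => Csub (P M) L) N)).
  2:{ rewrite Csum_sub, Csum_const.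
       replace L with (Cmul (Cmul (RtoC (/ INR (S N))) (RtoC (INR (S N)))) L) at 2 by (rewrite inv_INR_mul; ring).
       ring. }
  rewrite Cnorm_mean. set (n := INR (S N)).
  assert (Hn : INR N0 <= n). { unfold n. apply le_INR. lia. }
  assert (Hn0 : 0 < n) by (unfold n; apply lt_0_INR; lia).
  pose proof (Csum_norm (fun M => Csub (P M) L) N) as H1.
  pose proof (Rsum_tail_bound (fun M => Cnorm (Csub (P M) L)) K (e/3) ltac:(intros M HM; left; apply HK; lia) (S N - K)) as H2.
  replace (K + (S N - K))%nat with (S N) in H2 by lia. fold C in H2.
  assert (INR (S N - K) <= n). { unfold n. apply le_INR. lia. }
  assert (Cnorm (Csum (fun M => Csub (P M) L) N) <= C + n * (e/3)) by nra.
  apply Rle_lt_trans with (/ n * (C + n * (e/3))).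
  apply Rmult_le_compat_l; auto. apply Rlt_le, Rinv_0_lt_compat; auto.
  replace (/ n * (C + n * (e / 3))) with (C / n + e/3) by (field; lra).
  assert (C / n < e/3). { apply (Rmult_lt_reg_r n); auto. unfold Rdiv. rewrite Rmult_assoc, Rinv_l by lra. nra. }
  lra. Qed.

Lemma mean_bounded0 : forall Sq B, (forall N, Cnorm (Sq N) <= B) -> Ccv (fun N => Cmul (RtoC (/ INR (S N))) (Sq N)) Czero.
Proof. intros Sq B HB e He. destruct (INR_archimed e (Rabs B) He) as [N0 HN0]. exists N0. intros N HN.
  replace (Csub (Cmul (RtoC (/ INR (S N))) (Sq N)) Czero) with (Cmul (RtoC (/ INR (S N))) (Sq N)) by ring.
  rewrite Cnorm_mean. set (n := INR (S N)).
  assert (Hn : INR N0 <= n). { unfold n. apply le_INR. lia. }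
  assert (Hn0 : 0 < n) by (unfold n; apply lt_0_INR; lia).
  specialize (HB N). pose proof (Rle_abs B).
  apply Rle_lt_trans with (/ n * Rabs B). apply Rmult_le_compat_l. apply Rlt_le, Rinv_0_lt_compat; auto. lra.
  apply (Rmult_lt_reg_l n); auto. rewrite <- Rmult_assoc, Rinv_r, Rmult_1_l by lra. nra. Qed.

Lemma pair_sum : forall s a M, Csum (fun m => Cadd (s m) (prep a s m)) M = Cadd (Csub (Cadd (Csum s M) (Csum s M)) (s M)) a.
Proof. intros s a M; induction M. simpl. ring. simpl Csum. rewrite IHM. simpl prep. ring. Qed.

Lemma half_double : forall x, Cmul (RtoC (/2)) (Cadd x x) = x.
Proof. intros [a b]. apply Cplx_ext; simpl; field. Qed.

Lemma cesaro_pair : forall s a L Bs, (forall m, Cnorm (s m) <= Bs) -> Cser (fun m => Cadd (s m) (prep a s m)) L ->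
  Ccesaro s (Cmul (RtoC (/2)) (Csub L a)).
Proof. intros s a L Bs Hs HL. unfold Ccesaro. set (P := Csum (fun m => Cadd (s m) (prep a s m))).
  assert (HS : forall M, Csum s M = Cmul (RtoC (/2)) (Cadd (Csub (P M) a) (s M))).
  { intro M. unfold P. rewrite pair_sum.
    replace (Cadd (Csub (Cadd (Csub (Cadd (Csum s M) (Csum s M)) (s M)) a) a) (s M)) with (Cadd (Csum s M) (Csum s M)) by ring.
    rewrite half_double. auto. }
  destruct (Ccv_bounded P L HL) as [BP HBP].
  assert (HSb : forall N, Cnorm (Csum s N) <= / 2 * (BP + Cnorm a + Bs)).
  { intro N. rewrite HS, Cnorm_mul, Cnorm_RtoC. rewrite Rabs_right by lra.
    apply Rmult_le_compat_l. lra. eapply Rle_trans. apply Cnorm_triangle. unfold Csub.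
    pose proof (Cnorm_triangle (P N) (Copp a)). rewrite Cnorm_opp in H. specialize (HBP N). specialize (Hs N). lra. }
  apply (Ccv_ext (fun N => Cmul (RtoC (/2)) (Cadd (Cmul (RtoC (/ INR (S N))) (Csum (fun M => Csub (P M) a) N))
      (Cmul (RtoC (/ INR (S N))) (Csum s N))))).
  { intro N. rewrite (Csum_ext (Csum s) (fun M => Cmul (RtoC (/2)) (Cadd (Csub (P M) a) (s M))) N HS).
    rewrite Csum_scal, Csum_add. ring. }
  eapply Ccv_eq. apply Ccv_scal. apply Ccv_add. apply cesaro_reg. apply (Ccv_sub P (fun _ => a)). exact HL. apply Ccv_const.
  apply (mean_bounded0 _ _ HSb). ring. Qed.

Lemma tri_double : forall n, (tri n + tri n + n = n * n)%nat.
Proof. induction n; simpl; lia. Qed.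

Lemma Cinv_inv : forall x, Cinv (Cinv x) = x.
Proof. intros x. destruct (Req_dec (Cnorm x) 0) as [E|E].
  - apply Cnorm_eq0 in E. subst. apply Cplx_ext; unfold Cinv, Czero, Cnorm2; simpl; unfold Rdiv; ring.
  - assert (x <> Czero) by (intro; subst; apply E, Cnorm_zero).
    assert (Cinv x <> Czero). { intro H1. assert (H2 : Cmul (Cinv x) x = Czero) by (rewrite H1; ring).
      rewrite Cinv_l in H2; auto. injection H2; lra. }
    transitivity (Cmul (Cmul (Cinv (Cinv x)) (Cinv x)) x).
    replace (Cinv (Cinv x)) with (Cmul (Cinv (Cinv x)) (Cmul (Cinv x) x)) at 1 by (rewrite Cinv_l by auto; ring).
    ring. rewrite Cinv_l by auto. ring. Qed.

Lemma Cpow_cancel : forall x a b, x <> Czero -> Cmul (Cpow x a) (Cpow (Cinv x) (a + b)) = Cpow (Cinv x) b.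
Proof. intros x a b Hx. rewrite Cpow_add. induction a; simpl. ring.
  replace (Cmul (Cmul x (Cpow x a)) (Cmul (Cmul (Cinv x) (Cpow (Cinv x) a)) (Cpow (Cinv x) b)))
    with (Cmul (Cmul x (Cinv x)) (Cmul (Cpow x a) (Cmul (Cpow (Cinv x) a) (Cpow (Cinv x) b)))) by ring.
  rewrite IHa. field. auto. Qed.

Lemma qpochZ_nat : forall a p n, qpochZ a p (Z.of_nat n) = qpoch a p n.
Proof. intros a p [|n]. reflexivity. unfold qpochZ. simpl. rewrite SuccNat2Pos.id_succ. reflexivity. Qed.

Lemma qpochZ_neg : forall a p m, qpochZ a p (- Z.of_nat (S m))%Z =
  Cinv (qpoch (Cmul a (Cpow (Cinv p) (S m))) p (S m)).
Proof. intros. unfold qpochZ. simpl. rewrite SuccNat2Pos.id_succ. reflexivity. Qed.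

Lemma qpoch_rev : forall p v a n, Cmul v p = Cone ->
  qpoch (Cmul a (Cpow v n)) p n = Cmul (Cpow v (tri (S n))) (NP p a n).
Proof. intros p v a n Hv. induction n. simpl. ring.
  rewrite qpoch_shift. replace (Cmul (Cmul a (Cpow v (S n))) p) with (Cmul a (Cpow v n)).
  2:{ simpl. replace (Cmul a (Cmul v (Cpow v n))) with (Cmul (Cmul a (Cpow v n)) v) by ring.
      replace (Cmul (Cmul (Cmul a (Cpow v n)) v) p) with (Cmul (Cmul a (Cpow v n)) (Cmul v p)) by ring.
      rewrite Hv. ring. }
  rewrite IHn. simpl tri. simpl NP. rewrite !Cpow_add.
  assert (Cmul (Cpow v n) (Cpow p n) = Cone). { rewrite <- Cpow_mul, Hv. clear. induction n; simpl. auto. rewrite IHn. ring. }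
  replace (Cpow v (S n)) with (Cmul v (Cpow v n)) by reflexivity.
  replace (Cpow p (S n)) with (Cmul p (Cpow p n)) by reflexivity.
  replace (Cmul v (Cpow v n)) with (Cmul v (Cpow v n)) by reflexivity.
  transitivity (Cmul (Cmul (Cpow v (tri n)) (Cpow v n)) (Cmul (NP p a n)
     (Csub (Cmul (Cmul v p) (Cmul (Cpow v n) (Cpow p n))) (Cmul a (Cmul v (Cpow v n)))))).
  - rewrite H, Hv. ring.
  - ring. Qed.

Lemma NP_zero_self : forall p m, NP p p (S m) = Czero.
Proof. intros p m. induction m. simpl. ring. change (NP p p (S (S m))) with (Cmul (NP p p (S m)) (Csub (Cpow p (S (S m))) p)).
  rewrite IHm. ring. Qed.

Lemma NP_m1 : forall p n, NP p (Copp Cone) n = qpoch (Copp p) p n.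
Proof. intros p n; induction n; simpl; auto. rewrite IHn. ring. Qed.

Lemma NP_q : forall q p n, p = Cmul q q -> NP p q n = Cmul (Cpow (Copp q) n) (qpoch q p n).
Proof. intros q p n Hp; induction n. simpl. ring. simpl NP. simpl qpoch. rewrite IHn.
  simpl Cpow. rewrite Hp. ring. Qed.

Lemma NP_mq : forall q p n, p = Cmul q q -> NP p (Copp q) n = Cmul (Cpow q n) (qpoch (Copp q) p n).
Proof. intros q p n Hp; induction n. simpl. ring. simpl NP. simpl qpoch. rewrite IHn.
  simpl Cpow. rewrite Hp. ring. Qed.

Lemma NP_zero : forall p n, NP p Czero n = Cpow p (tri (S n)).
Proof. intros p n; induction n. simpl. ring. simpl NP. rewrite IHn.
  change (tri (S (S n))) with (tri (S n) + S n)%nat. rewrite Cpow_add. simpl Cpow. ring. Qed.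

Lemma Cinv_opp : forall x, Cinv (Copp x) = Copp (Cinv x).
Proof. intros [a b]. apply Cplx_ext; unfold Cinv, Cnorm2, Copp; simpl;
  replace (-a * -a + -b * -b) with (a*a+b*b) by ring; unfold Rdiv; ring. Qed.

Lemma Copp_Cinv_opp : forall x, Copp (Cinv (Copp x)) = Cinv x.
Proof. intros. rewrite Cinv_opp. ring. Qed.

Lemma pow_sq : forall q n, Cpow q (n * n) = uterm (Cpow q 2) (Copp q) n.
Proof. intros q n. unfold uterm. replace (Copp (Copp q)) with q by ring. rewrite <- Cpow_pow, <- Cpow_add.
  f_equal. pose proof (tri_double n). lia. Qed.

Lemma pow_sq2 : forall q n, Cpow q (n * n + n) = uterm (Cpow q 2) (Copp (Cpow q 2)) n.
Proof. intros q n. unfold uterm. replace (Copp (Copp (Cpow q 2))) with (Cpow q 2) by ring.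
  rewrite <- !Cpow_pow, <- Cpow_add. f_equal. pose proof (tri_double n). lia. Qed.

Lemma Cdiv_Cinv : forall x y, Cdiv x (Cinv y) = Cmul x y.
Proof. intros. unfold Cdiv. rewrite Cinv_inv. reflexivity. Qed.

Lemma Cpow_cancel0 : forall x j, x <> Czero -> Cmul (Cpow x j) (Cpow (Cinv x) j) = Cone.
Proof. intros. pose proof (Cpow_cancel x j 0 H). rewrite Nat.add_0_r in H0. rewrite H0. reflexivity. Qed.

Lemma vp1 : forall q, q <> Czero -> Cmul (Cinv (Cpow q 2)) (Cpow q 2) = Cone.
Proof. intros. apply Cinv_l. apply Cpow_ne0; auto. Qed.

Lemma vpow : forall q k, q <> Czero -> Cpow (Cinv (Cpow q 2)) k = Cpow (Cinv q) (2 * k).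
Proof. intros. rewrite Cpow_pow. f_equal. simpl. field. auto. Qed.

Lemma B1pos : forall q a n, Cdiv (Cpow q (Z.to_nat (Z.of_nat n * Z.of_nat n))) (qpochZ a (Cpow q 2) (Z.of_nat n)) =
  tp (Cpow q 2) a (Copp q) n.
Proof. intros. rewrite <- Nat2Z.inj_mul, Nat2Z.id, qpochZ_nat. unfold tp. rewrite pow_sq. reflexivity. Qed.

Lemma B1neg : forall q a m, q <> Czero ->
  Cdiv (Cpow q (Z.to_nat ((- Z.of_nat (S m)) * (- Z.of_nat (S m))))) (qpochZ a (Cpow q 2) (- Z.of_nat (S m))) =
  tm (Cpow q 2) a (Copp q) m.
Proof. intros q a m Hq.
  replace ((- Z.of_nat (S m)) * (- Z.of_nat (S m)))%Z with (Z.of_nat (S m * S m)) by (rewrite Nat2Z.inj_mul; ring).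
  rewrite Nat2Z.id, qpochZ_neg, Cdiv_Cinv. rewrite (qpoch_rev (Cpow q 2) (Cinv (Cpow q 2))) by (apply vp1; auto).
  unfold tm. rewrite Copp_Cinv_opp.
  rewrite vpow by auto. replace (2 * tri (S (S m)))%nat with (S m * S m + S m)%nat by (pose proof (tri_double (S (S m))); nia).
  transitivity (Cmul (Cmul (Cpow q (S m * S m)) (Cpow (Cinv q) (S m * S m + S m))) (NP (Cpow q 2) a (S m))).
  ring. rewrite Cpow_cancel by auto. reflexivity. Qed.

Lemma one_plus_ne0 : forall q, Cnorm q < 1 -> Cadd Cone q <> Czero.
Proof. intros. replace (Cadd Cone q) with (Csub Cone (Copp q)) by ring. apply one_sub_ne0. rewrite Cnorm_opp; auto. Qed.

Lemma Cnorm_q2 : forall q, Cnorm q < 1 -> Cnorm (Cpow q 2) < 1.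
Proof. intros. rewrite Cnorm_pow. pose proof (Cnorm_ge0 q). simpl. nra. Qed.

Lemma B2pos : forall q n, Cnorm q < 1 ->
  Cdiv (Cpow q (Z.to_nat (Z.of_nat n * Z.of_nat n + Z.of_nat n))) (qpochZ (Copp q) (Cpow q 2) (Z.of_nat n + 1)) =
  Cmul (Cinv (Cadd Cone q)) (tp (Cpow q 2) (Cmul (Copp q) (Cpow q 2)) (Copp (Cpow q 2)) n).
Proof. intros q n Hq.
  replace (Z.of_nat n * Z.of_nat n + Z.of_nat n)%Z with (Z.of_nat (n * n + n)) by (rewrite Nat2Z.inj_add, Nat2Z.inj_mul; ring).
  replace (Z.of_nat n + 1)%Z with (Z.of_nat (S n)) by lia.
  rewrite Nat2Z.id, qpochZ_nat, qpoch_shift. unfold tp. rewrite pow_sq2.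
  assert (qpoch (Cmul (Copp q) (Cpow q 2)) (Cpow q 2) n <> Czero).
  { apply qpoch_ne0. rewrite Cnorm_mul, Cnorm_opp. pose proof (Cnorm_q2 q Hq). pose proof (Cnorm_ge0 q).
    pose proof (Cnorm_ge0 (Cpow q 2)). nra. apply Cnorm_q2; auto. }
  pose proof (one_plus_ne0 q Hq).
  replace (Csub Cone (Copp q)) with (Cadd Cone q) by ring. field. auto. Qed.

Lemma NP2_lhs : forall q m, q <> Czero ->
  Cdiv (Cpow q (Z.to_nat ((- Z.of_nat (S m)) * (- Z.of_nat (S m)) + - Z.of_nat (S m))))
       (qpochZ (Copp q) (Cpow q 2) (- Z.of_nat (S m) + 1)) = NP (Cpow q 2) (Copp q) m.
Proof. intros q m Hq.
  replace ((- Z.of_nat (S m)) * (- Z.of_nat (S m)) + - Z.of_nat (S m))%Z with (Z.of_nat (m * S m))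
    by (rewrite Nat2Z.inj_mul, Nat2Z.inj_succ; ring).
  replace (- Z.of_nat (S m) + 1)%Z with (- Z.of_nat m)%Z by lia.
  rewrite Nat2Z.id. destruct m.
  - simpl. unfold Cdiv. replace (Cinv Cone) with Cone by (field; intro E; injection E; lra). ring.
  - rewrite qpochZ_neg, Cdiv_Cinv. rewrite (qpoch_rev (Cpow q 2) (Cinv (Cpow q 2))) by (apply vp1; auto).
    rewrite vpow by auto. replace (2 * tri (S (S m)))%nat with (S m * S (S m) + 0)%nat
      by (pose proof (tri_double (S (S m))); nia).
    transitivity (Cmul (Cmul (Cpow q (S m * S (S m))) (Cpow (Cinv q) (S m * S (S m) + 0))) (NP (Cpow q 2) (Copp q) (S m))).
    ring. rewrite Cpow_cancel by auto. simpl. ring. Qed.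

Lemma NP2_rhs : forall q m, Cnorm q < 1 -> q <> Czero ->
  Cmul (Cinv (Cadd Cone q)) (tm (Cpow q 2) (Cmul (Copp q) (Cpow q 2)) (Copp (Cpow q 2)) m) = NP (Cpow q 2) (Copp q) m.
Proof. intros q m Hq Hq0. unfold tm. rewrite NP_shift.
  assert (Hp : Cpow q 2 <> Czero) by (apply Cpow_ne0; auto).
  rewrite Copp_Cinv_opp.
  pose proof (one_plus_ne0 q Hq). pose proof (Cpow_cancel0 (Cpow q 2) (S m) Hp).
  replace (Csub Cone (Copp q)) with (Cadd Cone q) by ring.
  transitivity (Cmul (Cmul (Cinv (Cadd Cone q)) (Cadd Cone q)) (Cmul (Cmul (Cpow (Cpow q 2) (S m)) (Cpow (Cinv (Cpow q 2)) (S m))) (NP (Cpow q 2) (Copp q) m))).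
  ring. rewrite H0. field. auto. Qed.

Lemma S1 : forall q r, q <> Czero ->
  Cmul (qpoch (Copp Cone) (Cpow q 2) (S r)) (Cpow q (S r)) = tm (Cpow q 2) (Copp (Cpow q 2)) (Copp q) r.
Proof. intros q r Hq. unfold tm. replace (Copp (Cpow q 2)) with (Cmul (Copp Cone) (Cpow q 2)) by ring.
  rewrite NP_shift, qpoch_shift, NP_m1.
  replace (Cmul (Copp Cone) (Cpow q 2)) with (Copp (Cpow q 2)) by ring.
  rewrite Copp_Cinv_opp.
  rewrite <- Cpow_pow. replace (2 * S r)%nat with (S r + S r)%nat by lia. rewrite Cpow_add.
  transitivity (Cmul (Cmul (Cpow q (S r)) (Cpow (Cinv q) (S r))) (Cmul (Cpow q (S r)) (Cmul (Csub Cone (Copp Cone)) (qpoch (Copp (Cpow q 2)) (Cpow q 2) r)))).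
  rewrite Cpow_cancel0 by auto. ring. ring. Qed.

Lemma S3 : forall q m, q <> Czero ->
  Cmul (qpoch q (Cpow q 2) (S m)) (Cpow (Copp Cone) (S m)) = tm (Cpow q 2) q (Copp q) m.
Proof. intros q m Hq. unfold tm. rewrite (NP_q q (Cpow q 2)) by (simpl; ring).
  rewrite Copp_Cinv_opp.
  transitivity (Cmul (Cpow (Cmul (Cinv q) (Copp q)) (S m)) (qpoch q (Cpow q 2) (S m))).
  replace (Cmul (Cinv q) (Copp q)) with (Copp Cone) by (field; auto). ring.
  rewrite Cpow_mul. ring. Qed.

Lemma solve_mul : forall U X Y, X <> Czero -> Cmul U X = Y -> U = Cdiv Y X.
Proof. intros. subst. field. auto. Qed.

Lemma Cser_zero : Cser (fun _ => Czero) Czero.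
Proof. unfold Cser. apply (Ccv_ext (fun _ => Czero)). intro n; induction n; simpl; auto. rewrite <- IHn. ring.
  apply Ccv_const. Qed.

Lemma Ub_p : forall p z, Ub p p z = G p z.
Proof. intros. unfold Ub, G. replace (csum (tm p p z)) with Czero.
  - replace (tp p p z) with (gterm p z) by reflexivity. ring.
  - symmetry. apply csum_eq. eapply Cser_ext; [|apply Cser_zero]. intro k. unfold tm. rewrite NP_zero_self. ring. Qed.

Lemma TP : forall p z, Cnorm p < 1 -> z <> Czero -> Cnorm p * Cnorm (Cinv z) < 1 ->
  Tz p z = Cmul (G p z) (Cmul (G p p) (G p (Cdiv p z))).
Proof. intros. rewrite <- (ML p p z) by auto. rewrite Ub_p. reflexivity. Qed.

Lemma tp_zero : forall p z k, tp p Czero z k = uterm p z k.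
Proof. intros. unfold tp, Cdiv. rewrite qpoch_zero. replace (Cinv Cone) with Cone by (field; intro E; injection E; lra). ring. Qed.

Lemma Cpow_one : forall k, Cpow Cone k = Cone.
Proof. induction k; simpl; auto. rewrite IHk. ring. Qed.

Lemma Tshift : forall p, Cnorm p < 1 -> p <> Czero -> Tz p (Copp p) = Tz p (Copp Cone).
Proof. intros p Hp Hp0. set (f := fun j => Cpow p (tri j)).
  assert (Hm1 : Copp Cone <> Czero) by (intro E; injection E; lra).
  assert (Hp1 : Copp p <> Czero) by (intro E; apply Hp0; replace p with (Copp (Copp p)) by ring; rewrite E; ring).
  assert (Hn1 : Cnorm (Cinv (Copp Cone)) = 1).
  { rewrite Cnorm_inv, Cnorm_opp, Cnorm_one by auto. lra. }
  assert (Hnp : Cnorm (Cinv (Copp p)) = / Cnorm p).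
  { rewrite Cnorm_inv, Cnorm_opp; auto. }
  assert (H0 : Cnorm Czero < 1) by (rewrite Cnorm_zero; lra).
  assert (HA1 : Cser (fun k => f (S k)) (csum (tp p Czero (Copp p)))).
  { eapply Cser_ext; [|apply tp_ser; auto]. intro k. rewrite tp_zero. unfold uterm, f. simpl tri.
    rewrite Cpow_add. replace (Copp (Copp p)) with p by ring. ring. }
  assert (HB1 : Cser (fun k => f (S k)) (csum (tm p Czero (Copp p)))).
  { eapply Cser_ext; [|apply tm_ser; auto]. intro k. unfold tm, f. rewrite NP_zero.
    change (tri (S (S k))) with (tri (S k) + S k)%nat. rewrite Cpow_add. rewrite Copp_Cinv_opp.
    transitivity (Cmul (Cpow p (tri (S k))) (Cmul (Cpow p (S k)) (Cpow (Cinv p) (S k)))).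
    ring. rewrite Cpow_cancel0 by auto. ring.
    rewrite Cnorm_zero. lra. }
  assert (HA2 : Cser f (csum (tp p Czero (Copp Cone)))).
  { eapply Cser_ext; [|apply tp_ser; auto]. intro k. rewrite tp_zero. unfold uterm, f.
    replace (Copp (Copp Cone)) with Cone by ring. rewrite Cpow_one. ring. }
  assert (HB2 : Cser (fun k => f (S (S k))) (csum (tm p Czero (Copp Cone)))).
  { eapply Cser_ext; [|apply tm_ser; auto]. intro k. unfold tm, f. rewrite NP_zero.
    rewrite Copp_Cinv_opp. replace (Cinv Cone) with Cone by (field; intro E; injection E; lra). rewrite Cpow_one. ring.
    rewrite Cnorm_zero. lra. }
  pose proof (Cser_unique _ _ _ HA1 (Cser_shift _ _ HA2)) as E1.
  pose proof (Cser_unique _ _ _ HB2 (Cser_shift _ _ HB1)) as E2.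
  unfold Tz. rewrite E1, E2. unfold f. simpl. ring. Qed.

Lemma qp_pm : forall q p p2 N, p = Cmul q q -> p2 = Cmul p p ->
  Cmul (qpoch q p N) (qpoch (Copp q) p N) = qpoch p p2 N.
Proof. intros q p p2 N Hp Hp2. subst p2. induction N. simpl. ring.
  simpl qpoch. rewrite <- IHN. rewrite Cpow_mul.
  replace (Csub Cone (Cmul p (Cmul (Cpow p N) (Cpow p N)))) with (Csub Cone (Cmul (Cmul q q) (Cmul (Cpow p N) (Cpow p N)))).
  ring. rewrite <- Hp. reflexivity. Qed.

Lemma qp_even : forall p p2 N, p2 = Cmul p p -> qpoch p p (2 * N) = Cmul (qpoch p p2 N) (qpoch p2 p2 N).
Proof. intros p p2 N Hp2. subst p2. induction N. simpl. ring.
  replace (2 * S N)%nat with (S (S (2 * N))) by lia.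
  change (qpoch p p (S (S (2*N)))) with (Cmul (Cmul (qpoch p p (2*N)) (Csub Cone (Cmul p (Cpow p (2*N))))) (Csub Cone (Cmul p (Cpow p (S (2*N)))))).
  rewrite IHN. simpl qpoch.
  rewrite Cpow_mul. replace (2 * N)%nat with (N + N)%nat by lia. simpl Cpow. rewrite !Cpow_add. ring. Qed.

Lemma G_pm : forall q p p2, p = Cmul q q -> p2 = Cmul p p -> Cnorm p < 1 -> Cnorm p2 < 1 ->
  Cmul (G p q) (G p (Copp q)) = G p2 p.
Proof. intros q p p2 Hp Hp2 H1 H2. eapply Ccv_unique; [|apply (G_prod p2 p H2)].
  apply (Ccv_ext (fun N => Cmul (qpoch q p N) (qpoch (Copp q) p N))). intro; apply qp_pm; auto.
  apply Ccv_mul; apply G_prod; auto. Qed.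

Lemma G_even : forall p p2, p2 = Cmul p p -> Cnorm p < 1 -> Cnorm p2 < 1 ->
  G p p = Cmul (G p2 p) (G p2 p2).
Proof. intros p p2 Hp2 H1 H2. eapply Ccv_unique.
  apply (Ccv_subseq _ _ (fun n => (2 * n)%nat) ltac:(intro n; cbv beta; lia) (G_prod p p H1)).
  apply (Ccv_ext (fun N => Cmul (qpoch p p2 N) (qpoch p2 p2 N))). intro; symmetry; apply qp_even; auto.
  apply Ccv_mul; apply G_prod; auto. Qed.

Lemma PosRel : forall p b z, z <> Czero -> Cnorm p < 1 -> Cnorm b < 1 -> Cnorm (Cmul b p) < 1 ->
  csum (tp p b z) = Cadd (Cmul (Cinv (Csub Cone b)) (csum (tp p (Cmul b p) z))) (Cmul (Cdiv b z) (Csub (csum (tp p b z)) (tp p b z 0))).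
Proof. intros p b z Hz Hp Hb Hbp. pose proof (tp_ser p b z Hp Hb) as HA. pose proof (tp_ser p (Cmul b p) z Hp Hbp) as HA'.
  apply (Cser_unique (tp p b z)); auto.
  eapply Cser_ext; [|apply (Cser_add _ _ _ _ (Cser_scal _ _ (Cinv (Csub Cone b)) HA') (Cser_scal _ _ (Cdiv b z) (Cser_shift _ _ HA)))].
  intro k. cbv beta. rewrite (Rplus_rec p b z k); auto. unfold Cdiv. ring.
  apply qpoch_ne0; auto. apply one_sub_ne0; auto. Qed.

Lemma qpoch_bounded : forall a p, Cnorm a < 1 -> Cnorm p < 1 -> exists B, forall n, Cnorm (qpoch a p n) <= B.
Proof. intros a p Ha Hp. destruct (prod_lower (Cnorm a) (Cnorm p)) as [c [Hc Hl]].
  split; [apply Cnorm_ge0|auto]. split; [apply Cnorm_ge0|auto].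
  exists (/ c). intro n. assert (Hf : forall j, 0 <= 1 - Cnorm a * Cnorm p ^ j).
  { intro j. pose proof (pow_le1 (Cnorm p) j ltac:(pose proof (Cnorm_ge0 p); lra)).
    pose proof (Cnorm_ge0 a). assert (0 <= Cnorm p ^ j) by (apply pow_le, Cnorm_ge0). nra. }
  pose proof (qpoch_up a p n Hf). specialize (Hl n). pose proof (Cnorm_ge0 (qpoch a p n)).
  apply (Rmult_le_reg_r c); auto. rewrite Rinv_l by lra. nra. Qed.

Lemma Ccesaro_ext : forall f g l, (forall k, f k = g k) -> Ccesaro f l -> Ccesaro g l.
Proof. intros f g l H H1. unfold Ccesaro in *. eapply Ccv_ext; [|exact H1]. intro N. cbv beta.
  f_equal. apply Csum_ext. intro. apply Csum_ext. auto. Qed.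

Lemma bil1_pos : forall q n, bil1 q (Z.of_nat n) = tp (Cpow q 2) (Copp (Cpow q 2)) (Copp q) n.
Proof. intros. unfold bil1. apply B1pos. Qed.
Lemma bil1_neg : forall q m, q <> Czero -> bil1 q (- Z.of_nat (S m))%Z = tm (Cpow q 2) (Copp (Cpow q 2)) (Copp q) m.
Proof. intros. unfold bil1. apply B1neg; auto. Qed.
Lemma bil3_pos : forall q n, bil3 q (Z.of_nat n) = tp (Cpow q 2) q (Copp q) n.
Proof. intros. unfold bil3. apply B1pos. Qed.
Lemma bil3_neg : forall q m, q <> Czero -> bil3 q (- Z.of_nat (S m))%Z = tm (Cpow q 2) q (Copp q) m.
Proof. intros. unfold bil3. apply B1neg; auto. Qed.
Lemma bil2_pos : forall q n, Cnorm q < 1 -> bil2 q (Z.of_nat n) =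
  Cmul (Cinv (Cadd Cone q)) (tp (Cpow q 2) (Cmul (Copp q) (Cpow q 2)) (Copp (Cpow q 2)) n).
Proof. intros. unfold bil2. apply B2pos; auto. Qed.
Lemma bil2_neg : forall q m, Cnorm q < 1 -> q <> Czero -> bil2 q (- Z.of_nat (S m))%Z =
  Cmul (Cinv (Cadd Cone q)) (tm (Cpow q 2) (Cmul (Copp q) (Cpow q 2)) (Copp (Cpow q 2)) m).
Proof. intros. unfold bil2. rewrite NP2_lhs, NP2_rhs; auto. Qed.
Lemma phi_eq : forall q n, phi_term q n = tp (Cpow q 2) (Copp (Cpow q 2)) (Copp q) n.
Proof. intros. unfold phi_term, tp. rewrite pow_sq. reflexivity. Qed.
Lemma psi_eq : forall q k, psi_term q k = tp (Cpow q 2) q (Copp q) (S k).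
Proof. intros. unfold psi_term, tp. rewrite pow_sq. reflexivity. Qed.
Lemma nu_eq : forall q n, Cnorm q < 1 -> nu_term q n =
  Cmul (Cinv (Cadd Cone q)) (tp (Cpow q 2) (Cmul (Copp q) (Cpow q 2)) (Copp (Cpow q 2)) n).
Proof. intros. rewrite <- B2pos by auto. unfold nu_term.
  replace (Z.of_nat n * Z.of_nat n + Z.of_nat n)%Z with (Z.of_nat (n * n + n)) by (rewrite Nat2Z.inj_add, Nat2Z.inj_mul; ring).
  replace (Z.of_nat n + 1)%Z with (Z.of_nat (S n)) by lia. rewrite Nat2Z.id, qpochZ_nat. reflexivity. Qed.

Lemma nq_facts : forall q, Cnorm q < 1 -> q <> Czero ->
  0 < Cnorm q /\ Cnorm (Cpow q 2) < 1 /\ Cpow q 2 <> Czero /\ Copp q <> Czero /\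
  Cnorm (Cinv (Copp q)) = / Cnorm q /\ Cnorm (Cpow q 2) = Cnorm q * Cnorm q.
Proof. intros q H H0. pose proof (Cnorm_pos q H0).
  assert (Copp q <> Czero). { intro E. apply H0. replace q with (Copp (Copp q)) by ring. rewrite E. ring. }
  repeat split; auto.
  - apply Cnorm_q2; auto.
  - apply Cpow_ne0; auto.
  - rewrite Cnorm_inv, Cnorm_opp; auto.
  - rewrite Cnorm_pow. simpl. ring. Qed.

Lemma id1 : forall q, Cnorm q < 1 -> q <> Czero ->
  (exists Phi Sr Pos Neg A B Cq D : Cplx,
     Cser (phi_term q) Phi /\
     Cser (fun r => Cmul (qpoch (Copp Cone) (Cpow q 2) (S r)) (Cpow q (S r))) Sr /\
     Cser (fun n => bil1 q (Z.of_nat n)) Pos /\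
     Cser (fun m => bil1 q (- Z.of_nat (S m))%Z) Neg /\
     qpinf (Copp q) (Cpow q 2) A /\ qpinf (Cpow q 2) (Cpow q 2) B /\
     qpinf q (Cpow q 2) Cq /\ qpinf (Copp (Cpow q 2)) (Cpow q 2) D /\
     Cadd Phi Sr = Cadd Pos Neg /\
     Cadd Pos Neg = Cdiv (Cmul (Cmul A A) B) (Cmul Cq D)).
Proof. intros q hq hq0. destruct (nq_facts q hq hq0) as [Hr [Hp [Hp0 [Hmq [Hinv Hp2]]]]].
  set (p := Cpow q 2) in *.
  assert (Hb : Cnorm (Copp p) < 1) by (rewrite Cnorm_opp; auto).
  assert (Hbz : Cnorm (Copp p) * Cnorm (Cinv (Copp q)) < 1).
  { rewrite Cnorm_opp, Hinv, Hp2. replace (Cnorm q * Cnorm q * / Cnorm q) with (Cnorm q) by (field; lra). lra. }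
  assert (Hpz : Cnorm p * Cnorm (Cinv (Copp q)) < 1).
  { rewrite Hinv, Hp2. replace (Cnorm q * Cnorm q * / Cnorm q) with (Cnorm q) by (field; lra). lra. }
  assert (Hq1 : Cnorm (Copp q) < 1) by (rewrite Cnorm_opp; auto).
  exists (csum (tp p (Copp p) (Copp q))), (csum (tm p (Copp p) (Copp q))),
    (csum (tp p (Copp p) (Copp q))), (csum (tm p (Copp p) (Copp q))),
    (G p (Copp q)), (G p p), (G p q), (G p (Copp p)).
  repeat split.
  - eapply Cser_ext; [|apply tp_ser; auto]. intro n. symmetry. apply phi_eq.
  - eapply Cser_ext; [|apply tm_ser; auto]. intro r. symmetry. apply S1; auto.
  - eapply Cser_ext; [|apply tp_ser; auto]. intro n. symmetry. apply bil1_pos.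
  - eapply Cser_ext; [|apply tm_ser; auto]. intro n. symmetry. apply bil1_neg; auto.
  - apply G_prod; auto.
  - apply G_prod; auto.
  - apply G_prod; auto.
  - apply G_prod; auto.
  - pose proof (ML p (Copp p) (Copp q) Hp Hmq Hb Hbz) as E.
    rewrite (TP p (Copp q) Hp Hmq Hpz) in E.
    replace (Cdiv (Copp p) (Copp q)) with q in E by (unfold p; simpl; field; auto).
    replace (Cdiv p (Copp q)) with (Copp q) in E by (unfold p; simpl; field; auto).
    pose proof (G_ne0 p (Copp p) Hp Hb). pose proof (G_ne0 p q Hp hq).
    apply solve_mul in E. unfold Ub in E. rewrite E. field. split; auto.
    apply Cmul_ne0; auto. Qed.

Lemma RtoC_2 : RtoC 2 = Cadd Cone Cone.
Proof. apply Cplx_ext; simpl; ring. Qed.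

Lemma id2 : forall q, Cnorm q < 1 -> q <> Czero ->
  (exists Nu Sr Pos Neg D E : Cplx,
     Cser (nu_term q) Nu /\
     Cser (fun r => Cmul (qpoch (Copp q) (Cpow q 2) r) (Cpow q r)) Sr /\
     Cser (fun n => bil2 q (Z.of_nat n)) Pos /\
     Cser (fun m => bil2 q (- Z.of_nat (S m))%Z) Neg /\
     qpinf (Copp (Cpow q 2)) (Cpow q 2) D /\ qpinf (Cpow q 4) (Cpow q 4) E /\
     Cadd Nu Sr = Cadd Pos Neg /\
     Cadd Pos Neg = Cmul (RtoC 2) (Cmul (Cmul D D) E)).
Proof. intros q hq hq0. destruct (nq_facts q hq hq0) as [Hr [Hp [Hp0 [Hmq [Hinv Hp2]]]]].
  assert (Hp4 : Cpow q 4 = Cmul (Cpow q 2) (Cpow q 2)) by ring.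
  assert (Hpq : Cpow q 2 = Cmul q q) by ring.
  set (p := Cpow q 2) in *. set (p2 := Cpow q 4) in *.
  assert (Hn2 : Cnorm p2 < 1). { rewrite Hp4, Cnorm_mul. pose proof (Cnorm_ge0 p). nra. }
  set (b2 := Cmul (Copp q) p). set (z2 := Copp p).
  assert (Hz2 : z2 <> Czero). { unfold z2. intro E. apply Hp0. replace p with (Copp (Copp p)) by ring. rewrite E. ring. }
  assert (Hinvz : Cnorm (Cinv z2) = / (Cnorm q * Cnorm q)).
  { unfold z2. rewrite Cnorm_inv, Cnorm_opp, Hp2; auto. }
  assert (Hb : Cnorm b2 < 1). { unfold b2. rewrite Cnorm_mul, Cnorm_opp, Hp2. nra. }
  assert (Hbz : Cnorm b2 * Cnorm (Cinv z2) < 1).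
  { rewrite Hinvz. unfold b2. rewrite Cnorm_mul, Cnorm_opp, Hp2.
    replace (Cnorm q * (Cnorm q * Cnorm q) * / (Cnorm q * Cnorm q)) with (Cnorm q) by (field; lra). lra. }
  set (ci := Cinv (Cadd Cone q)).
  pose proof (one_plus_ne0 q hq) as H1q.
  exists (Cmul ci (csum (tp p b2 z2))), (Cmul ci (csum (tm p b2 z2))),
    (Cmul ci (csum (tp p b2 z2))), (Cmul ci (csum (tm p b2 z2))), (G p (Copp p)), (G p2 p2).
  repeat split.
  - eapply Cser_ext; [|apply Cser_scal; apply tp_ser; auto]. intro n. symmetry. apply nu_eq; auto.
  - eapply Cser_ext; [|apply Cser_scal; apply tm_ser; auto]. intro r. unfold ci, b2, z2, p.
    rewrite NP2_rhs by auto. rewrite NP_mq by ring. ring.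
  - eapply Cser_ext; [|apply Cser_scal; apply tp_ser; auto]. intro n. symmetry. apply bil2_pos; auto.
  - eapply Cser_ext; [|apply Cser_scal; apply tm_ser; auto]. intro n. symmetry. apply bil2_neg; auto.
  - apply G_prod; auto.
  - apply G_prod; auto.
  -
    pose proof (ML p b2 z2 Hp Hz2 Hb Hbz) as E.
    replace (Cdiv b2 z2) with q in E by (unfold b2, z2, p; field; repeat split; auto).
    assert (Hm1 : Copp Cone <> Czero) by (intro X; injection X; lra).
    assert (Hpm1 : Cnorm p * Cnorm (Cinv (Copp Cone)) < 1).
    { rewrite Cnorm_inv, Cnorm_opp, Cnorm_one by auto. lra. }
    unfold z2 in E. rewrite (Tshift p Hp Hp0) in E. rewrite (TP p (Copp Cone) Hp Hm1 Hpm1) in E.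
    replace (Cdiv p (Copp Cone)) with (Copp p) in E by (field; intro X; injection X; lra).
    rewrite (G_fun p (Copp Cone) Hp) in E. replace (Cmul p (Copp Cone)) with (Copp p) in E by ring.
    assert (Hb2 : G p (Copp q) = Cmul (Csub Cone (Copp q)) (G p b2)).
    { rewrite (G_fun p (Copp q) Hp). unfold b2. f_equal. f_equal. ring. }
    pose proof (G_pm q p p2 Hpq Hp4 Hp Hn2) as Epm.
    pose proof (G_even p p2 Hp4 Hp Hn2) as Eev.
    assert (HGb2 : G p b2 <> Czero) by (apply G_ne0; auto).
    assert (HGq : G p q <> Czero) by (apply G_ne0; auto).
    assert (HGmq : G p (Copp q) <> Czero) by (apply G_ne0; auto; rewrite Cnorm_opp; auto).
    apply solve_mul in E; [|apply Cmul_ne0; auto].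
    replace (Cadd (Cmul ci (csum (tp p b2 z2))) (Cmul ci (csum (tm p b2 z2)))) with (Cmul ci (Ub p b2 (Copp p))) by (unfold Ub, z2; ring).
    rewrite E. rewrite Eev. rewrite <- Epm.
    assert (Eb : G p b2 = Cdiv (G p (Copp q)) (Csub Cone (Copp q))).
    { rewrite Hb2. assert (Csub Cone (Copp q) <> Czero) by (replace (Csub Cone (Copp q)) with (Cadd Cone q) by ring; auto). field; auto. }
    rewrite Eb. rewrite RtoC_2. unfold ci.
    replace (Csub Cone (Copp q)) with (Cadd Cone q) by ring.
    replace (Csub Cone (Copp Cone)) with (Cadd Cone Cone) by ring.
    field. repeat split; auto. Qed.

Lemma RtoC_half : RtoC (/2) = Cinv (Cadd Cone Cone).
Proof. apply Cplx_ext; unfold Cinv, Cnorm2; simpl; field. Qed.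

Lemma id3 : forall q, Cnorm q < 1 -> q <> Czero ->
  (exists Psi Sr Pos Neg A B Cq D : Cplx,
     Cser (psi_term q) Psi /\
     Ccesaro (fun r => Cmul (qpoch q (Cpow q 2) r) (Cpow (Copp Cone) r)) Sr /\
     Cser (fun n => bil3 q (Z.of_nat n)) Pos /\
     Ccesaro (fun m => bil3 q (- Z.of_nat (S m))%Z) Neg /\
     qpinf (Copp q) (Cpow q 2) A /\ qpinf (Cpow q 2) (Cpow q 2) B /\
     qpinf q (Cpow q 2) Cq /\ qpinf (Copp (Cpow q 2)) (Cpow q 2) D /\
     Cadd Psi Sr = Cadd Pos Neg /\
     Cadd Pos Neg = Cdiv (Cmul (Cmul A A) B) (Cmul (RtoC 2) (Cmul Cq D))).
Proof. intros q hq hq0. destruct (nq_facts q hq hq0) as [Hr [Hp [Hp0 [Hmq [Hinv Hp2]]]]].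
  set (p := Cpow q 2) in *.
  set (bq := Cmul q p).
  assert (Hbq : Cnorm bq < 1). { unfold bq. rewrite Cnorm_mul, Hp2. nra. }
  assert (Hbqz : Cnorm bq * Cnorm (Cinv (Copp q)) < 1).
  { unfold bq. rewrite Hinv, Cnorm_mul, Hp2.
    replace (Cnorm q * (Cnorm q * Cnorm q) * / Cnorm q) with (Cnorm q * Cnorm q) by (field; lra). nra. }
  assert (Hpz : Cnorm p * Cnorm (Cinv (Copp q)) < 1).
  { rewrite Hinv, Hp2. replace (Cnorm q * Cnorm q * / Cnorm q) with (Cnorm q) by (field; lra). lra. }
  assert (Hq1 : Cnorm (Copp q) < 1) by (rewrite Cnorm_opp; auto).
  assert (H1q : Csub Cone q <> Czero) by (apply one_sub_ne0; auto).
  set (t0 := tp p q (Copp q) 0).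
  assert (Ht0 : t0 = Cone).
  { unfold t0, tp, uterm, Cdiv. simpl. replace (Cinv Cone) with Cone by (field; intro X; injection X; lra). ring. }
  set (Pos3 := csum (tp p q (Copp q))).
  set (Ap := csum (tp p bq (Copp q))). set (Bp := csum (tm p bq (Copp q))).
  set (L := Cmul (Cinv (Csub Cone q)) Bp).
  set (s := tm p q (Copp q)).
  set (a := fun r => Cmul (qpoch q p r) (Cpow (Copp Cone) r)).
  assert (Has : forall m, a (S m) = s m). { intro m. unfold a, s, p. apply S3; auto. }
  destruct (qpoch_bounded q p hq Hp) as [Bq HBq].
  assert (Ha : forall r, Cnorm (a r) <= Bq).
  { intro r. unfold a. rewrite Cnorm_mul, Cnorm_pow, Cnorm_opp, Cnorm_one, pow1. rewrite Rmult_1_r. auto. }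
  assert (Hs : forall m, Cnorm (s m) <= Bq). { intro m. rewrite <- Has. auto. }
  assert (Hdiv : Cdiv q (Copp q) = Copp Cone) by (field; auto).
  assert (Hpair : Cser (fun m => Cadd (s m) (prep t0 s m)) L).
  { eapply Cser_ext; [|apply Cser_scal; apply tm_ser; auto]. intros [|m]; simpl prep.
    - unfold s. rewrite (Rminus1_rec p q (Copp q)); auto. rewrite Hdiv. fold t0. fold bq. unfold Cdiv. ring.
    - unfold s. rewrite (Rminus_rec p q (Copp q) m); auto. rewrite Hdiv. fold bq. unfold Cdiv. ring. }
  assert (Hpair_a : Cser (fun r => Cadd (a r) (prep Czero a r)) (Cadd Cone L)).
  { eapply Cser_ext; [|apply (Cser_prep Cone _ _ Hpair)]. intros [|m]; simpl prep.
    - unfold a. simpl. ring.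
    - rewrite Has. destruct m; simpl prep.
      + unfold a. simpl. rewrite Ht0. ring.
      + rewrite Has. reflexivity. }
  exists (Csub Pos3 t0), (Cmul (RtoC (/2)) (Csub (Cadd Cone L) Czero)), Pos3,
    (Cmul (RtoC (/2)) (Csub L t0)), (G p (Copp q)), (G p p), (G p q), (G p (Copp p)).
  repeat split.
  - eapply Cser_ext; [|apply Cser_shift; apply tp_ser; auto]. intro k. symmetry. apply psi_eq.
  - apply (cesaro_pair a Czero (Cadd Cone L) Bq Ha Hpair_a).
  - eapply Cser_ext; [|apply tp_ser; auto]. intro n. symmetry. apply bil3_pos.
  - eapply Ccesaro_ext; [|apply (cesaro_pair s t0 L Bq Hs Hpair)]. intro m. symmetry. apply bil3_neg; auto.
  - apply G_prod; auto.
  - apply G_prod; auto.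
  - apply G_prod; auto.
  - apply G_prod; auto.
  - rewrite Ht0, RtoC_half. field. intro X; injection X; lra.
  -
    assert (EP : Cadd Pos3 Pos3 = Cadd (Cmul (Cinv (Csub Cone q)) Ap) t0).
    { unfold Pos3 at 1. rewrite (PosRel p q (Copp q) Hmq Hp hq Hbq). rewrite Hdiv. fold Pos3. fold bq. fold Ap. fold t0. ring. }
    pose proof (ML p bq (Copp q) Hp Hmq Hbq Hbqz) as E.
    rewrite (TP p (Copp q) Hp Hmq Hpz) in E.
    replace (Cdiv bq (Copp q)) with (Copp p) in E by (unfold bq, p; field; repeat split; auto).
    replace (Cdiv p (Copp q)) with (Copp q) in E by (unfold p; field; repeat split; auto).
    assert (Hb : Cnorm (Copp p) < 1) by (rewrite Cnorm_opp; auto).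
    pose proof (G_ne0 p (Copp p) Hp Hb). pose proof (G_ne0 p bq Hp Hbq).
    apply solve_mul in E; [|apply Cmul_ne0; auto]. unfold Ub in E. fold Ap Bp in E.
    assert (EA : Ap = Csub (Cdiv (Cmul (G p (Copp q)) (Cmul (G p p) (G p (Copp q)))) (Cmul (G p bq) (G p (Copp p)))) Bp)
      by (rewrite <- E; ring).
    assert (EG : G p q = Cmul (Csub Cone q) (G p bq)).
    { rewrite (G_fun p q Hp). unfold bq. f_equal. f_equal. ring. }
    replace Pos3 with (Cmul (RtoC (/2)) (Cadd Pos3 Pos3)) by (apply half_double).
    rewrite EP. unfold L. rewrite EA. rewrite EG. rewrite Ht0, RtoC_half, RtoC_2.
    field. repeat split; auto. intro X; injection X; lra. Qed.

Theorem mainTheorem4 (q : Cplx) (hq : Cnorm q < 1) (hq0 : q <> Czero) :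
  (* first identity *)
  (exists Phi Sr Pos Neg A B Cq D : Cplx,
     Cser (phi_term q) Phi /\
     Cser (fun r => Cmul (qpoch (Copp Cone) (Cpow q 2) (S r)) (Cpow q (S r))) Sr /\
     Cser (fun n => bil1 q (Z.of_nat n)) Pos /\
     Cser (fun m => bil1 q (- Z.of_nat (S m))%Z) Neg /\
     qpinf (Copp q) (Cpow q 2) A /\ qpinf (Cpow q 2) (Cpow q 2) B /\
     qpinf q (Cpow q 2) Cq /\ qpinf (Copp (Cpow q 2)) (Cpow q 2) D /\
     Cadd Phi Sr = Cadd Pos Neg /\
     Cadd Pos Neg = Cdiv (Cmul (Cmul A A) B) (Cmul Cq D)) /\
  (* second identity *)
  (exists Nu Sr Pos Neg D E : Cplx,
     Cser (nu_term q) Nu /\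
     Cser (fun r => Cmul (qpoch (Copp q) (Cpow q 2) r) (Cpow q r)) Sr /\
     Cser (fun n => bil2 q (Z.of_nat n)) Pos /\
     Cser (fun m => bil2 q (- Z.of_nat (S m))%Z) Neg /\
     qpinf (Copp (Cpow q 2)) (Cpow q 2) D /\ qpinf (Cpow q 4) (Cpow q 4) E /\
     Cadd Nu Sr = Cadd Pos Neg /\
     Cadd Pos Neg = Cmul (RtoC 2) (Cmul (Cmul D D) E)) /\
  (* third identity: the series over r, and the negative-index half of the
     bilateral series, are summed in the Cesaro sense *)
  (exists Psi Sr Pos Neg A B Cq D : Cplx,
     Cser (psi_term q) Psi /\
     Ccesaro (fun r => Cmul (qpoch q (Cpow q 2) r) (Cpow (Copp Cone) r)) Sr /\
     Cser (fun n => bil3 q (Z.of_nat n)) Pos /\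
     Ccesaro (fun m => bil3 q (- Z.of_nat (S m))%Z) Neg /\
     qpinf (Copp q) (Cpow q 2) A /\ qpinf (Cpow q 2) (Cpow q 2) B /\
     qpinf q (Cpow q 2) Cq /\ qpinf (Copp (Cpow q 2)) (Cpow q 2) D /\
     Cadd Psi Sr = Cadd Pos Neg /\
     Cadd Pos Neg = Cdiv (Cmul (Cmul A A) B) (Cmul (RtoC 2) (Cmul Cq D))).
Proof.
  split; [apply id1; auto | split; [apply id2; auto | apply id3; auto]].
Qed.
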